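(* In the $N$-body setting of the context, let $\mathcal S$ be any set of particle pairs, enumerated in any order, and define $$\psi^{\mathrm{[DKB]^2}}_h=e^{\frac h2\hat T}\,e^{\frac h2\hat V_c}\,\psi^{\dagger W_s}_{h/2}\,\psi^{W_s}_{h/2}\,e^{\frac h2\hat V_c}\,e^{\frac h2\hat T}.$$ Then $$H^{\mathrm{[DKB]^2}}_{\mathrm{err}}=-\frac{h^2}{24}\{\{V_c,T\},T\}+\frac{h^2}{12}\{\{T,V_c\},V_c\}+\frac{h^2}{6}\{\{T,V_s\},V_c\}+\frac{h^2}{48}\{\{T,V_s\},V_s\}_3+\mathcal O(h^4).$$
   Context: Particles $i=1,\dots,N$ with masses $m_i>0$, positions $\vec x_i$, momenta $\vec p_i$ in $\mathbb R^3$; $G_N>0$. $T_i=\vec p_i^{\,2}/(2m_i)$, $T=\sum_iT_i$, $V_{ij}=-G_Nm_im_j/|\vec x_i-\vec x_j|$, $V=\sum_{i<j}V_{ij}$, $H=T+V$. $\mathcal S$ is a set of unordered pairs $\{i,j\}$; $V_s=\sum_{\{i,j\}\in\mathcal S}V_{ij}$, $V_c=V-V_s$. Poisson bracket $\{A,B\}=\sum_i(\partial_{\vec x_i}A\cdot\partial_{\vec p_i}B-\partial_{\vec p_i}A\cdot\partial_{\vec x_i}B)$; Lie operator $\hat Ff=\{f,F\}$, $e^{t\hat F}=\sum_kt^k\hat F^k/k!$; $[\hat A,\hat B]=\widehat{\{B,A\}}$. The surrogate Hamiltonian $\tilde H$ of a product $\Psi_h$ of such exponentials is the formal power series in $h$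 with $\Psi_h=\exp(h\widehat{\tilde H})$ from the Baker–Campbell–Hausdorff formula; $H_{\mathrm{err}}=\tilde H-H$; $\mathcal O(h^k)$ means terms of order $\ge k$. Enumerate $\mathcal S$ as $(i_n,j_n)$, $n=1,\dots,K_s$; $H_n=T_{i_n}+T_{j_n}+V_{i_nj_n}$; $B_n(h)=e^{h\hat H_n}e^{-h(\hat T_{i_n}+\hat T_{j_n})}$, $B_n^\dagger(h)=e^{-h(\hat T_{i_n}+\hat T_{j_n})}e^{h\hat H_n}$; $\psi^{W_s}_h=B_{K_s}(h)\cdots B_1(h)$, $\psi^{\dagger W_s}_h=B_1^\dagger(h)\cdots B_{K_s}^\dagger(h)$. $\{\{T,V_s\},V_s\}_3=\{\{T,V_s\},V_s\}-\sum_{\{i,j\}\in\mathcal S}\{\{T,V_{ij}\},V_{ij}\}$. *)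

(* Defs.v *)
From Stdlib Require Import Reals List Arith.
From Coquelicot Require Import Coquelicot.
Import ListNotations.
Open Scope R_scope.

(** Phase space point: (positions, momenta); [fst z i a] is coordinate
    a (a < 3) of the position of particle i (i < N); same for momenta. *)
Definition PS : Type := ((nat -> nat -> R) * (nat -> nat -> R))%type.
Definition PSfun : Type := PS -> R.

Definition rsum (n : nat) (f : nat -> R) : R := fold_right Rplus 0 (map f (seq 0 n)).
Definition lsum {A : Type} (l : list A) (f : A -> R) : R := fold_right Rplus 0 (map f l).

Definition upd (X : nat -> nat -> R) (i a : nat) (t : R) : nat -> nat -> R :=
  fun j b => if (Nat.eqb j i && Nat.eqb b a)%bool then t else X j b.

Definition dX (i a : nat) (F : PSfun) (z : PS) : R :=
  Derive (fun t => F (upd (fst z) i a t, snd z)) (fst z i a).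
Definition dP (i a : nat) (F : PSfun) (z : PS) : R :=
  Derive (fun t => F (fst z, upd (snd z) i a t)) (snd z i a).

Definition pb (N : nat) (A B : PSfun) : PSfun := fun z =>
  rsum N (fun i => rsum 3 (fun a =>
    dX i a A z * dP i a B z - dP i a A z * dX i a B z)).

Definition fadd (A B : PSfun) : PSfun := fun z => A z + B z.
Definition fsub (A B : PSfun) : PSfun := fun z => A z - B z.
Definition fscal (c : R) (A : PSfun) : PSfun := fun z => c * A z.

Definition Ti (m : nat -> R) (i : nat) : PSfun := fun z =>
  rsum 3 (fun a => (snd z i a) ^ 2) / (2 * m i).
Definition Ttot (N : nat) (m : nat -> R) : PSfun := fun z => rsum N (fun i => Ti m i z).
Definition dist (z : PS) (i j : nat) : R :=
  sqrt (rsum 3 (fun a => (fst z i a - fst z j a) ^ 2)).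
Definition Vij (G : R) (m : nat -> R) (i j : nat) : PSfun := fun z =>
  - G * m i * m j / dist z i j.
Definition Vtot (N : nat) (G : R) (m : nat -> R) : PSfun := fun z =>
  rsum N (fun i => rsum N (fun j => if Nat.ltb i j then Vij G m i j z else 0)).
Definition Htot N G m : PSfun := fadd (Ttot N m) (Vtot N G m).
(** S is an enumeration (list) of the pairs in the set 𝒮 *)
Definition Vs (G : R) (m : nat -> R) (S : list (nat * nat)) : PSfun := fun z =>
  lsum S (fun p => Vij G m (fst p) (snd p) z).
Definition Vc N G m S : PSfun := fsub (Vtot N G m) (Vs G m S).
Definition Hn G m (p : nat * nat) : PSfun :=
  fadd (fadd (Ti m (fst p)) (Ti m (snd p))) (Vij G m (fst p) (snd p)).
Definition Tpair m (p : nat * nat) : PSfun := fadd (Ti m (fst p)) (Ti m (snd p)).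

Definition pb3 N G m S : PSfun := fun z =>
  pb N (pb N (Ttot N m) (Vs G m S)) (Vs G m S) z
  - lsum S (fun p => pb N (pb N (Ttot N m) (Vij G m (fst p) (snd p)))
                             (Vij G m (fst p) (snd p)) z).

(** Formal power series in h with coefficients phase-space functions:
    [A k] is the coefficient of h^k. *)
Definition series : Type := nat -> PSfun.
Definition szero : series := fun _ _ => 0.
Definition sadd (A B : series) : series := fun k z => A k z + B k z.
Definition sscal (c : R) (A : series) : series := fun k z => c * A k z.
(** Lie bracket transported from the Lie operators:
    [Â, B̂] = \widehat{\{B,A\}}, so on functions [A,B] := {B,A};
    extended bilinearly (Cauchy product) to series. *)
Definition sbr (N : nat) (A B : series) : series := fun k z =>
  rsum (S k) (fun j => pb N (B (k - j)%nat) (A j) z).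

(** Baker–Campbell–Hausdorff: log(e^X e^Y) up to total degree 4
    (exact for coefficients of h^k, k <= 4, when X, Y have no h^0 term). *)
Definition bch (N : nat) (X Y : series) : series :=
  let XY := sbr N X Y in
  sadd (sadd (sadd X Y) (sscal (1/2) XY))
   (sadd (sadd (sscal (1/12) (sbr N X XY)) (sscal (-1/12) (sbr N Y XY)))
         (sscal (-1/24) (sbr N Y (sbr N X XY)))).

(** generator of e^{c h F̂} as a series: c h F *)
Definition mono (c : R) (F : PSfun) : series := fun k =>
  if Nat.eqb k 1 then fscal c F else fun _ => 0.

(** h·H̃ for a product e^{X_1} ... e^{X_n} (operators composed left to right) *)
Definition bchl (N : nat) (l : list series) : series := fold_left (bch N) l szero.

(** The exponents of ψ^{[DKB]^2}_h =
    e^{h/2 T} e^{h/2 V_c} ψ^{†W_s}_{h/2} ψ^{W_s}_{h/2} e^{h/2 V_c} e^{h/2 T},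
    ψ^{†W_s}_{h/2} = B_1^†(h/2)…B_K^†(h/2), B^†(h) = e^{-h(T_i+T_j)} e^{h H_n},
    ψ^{W_s}_{h/2} = B_K(h/2)…B_1(h/2),   B(h) = e^{h H_n} e^{-h(T_i+T_j)}. *)
Definition DKB2_factors N G m S : list series :=
  [mono (1/2) (Ttot N m); mono (1/2) (Vc N G m S)]
  ++ flat_map (fun p => [mono (-1/2) (Tpair m p); mono (1/2) (Hn G m p)]) S
  ++ flat_map (fun p => [mono (1/2) (Hn G m p); mono (-1/2) (Tpair m p)]) (rev S)
  ++ [mono (1/2) (Vc N G m S); mono (1/2) (Ttot N m)].

Definition Err2 N G m S : PSfun := fun z =>
  - 1/24 * pb N (pb N (Vc N G m S) (Ttot N m)) (Ttot N m) z
  + 1/12 * pb N (pb N (Ttot N m) (Vc N G m S)) (Vc N G m S) z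
  + 1/6 * pb N (pb N (Ttot N m) (Vs G m S)) (Vc N G m S) z
  + 1/48 * pb3 N G m S z.

(** h(H + h^2 Err2): coefficients of h^0..h^4 *)
Definition target N G m S : series := fun k =>
  if Nat.eqb k 1 then Htot N G m
  else if Nat.eqb k 3 then Err2 N G m S
  else fun _ => 0.

Definition noncoll (N : nat) (z : PS) : Prop :=
  forall i j, (i < N)%nat -> (j < N)%nat -> i <> j ->
    exists a, (a < 3)%nat /\ fst z i a <> fst z j a.

(* Main.v *)
Require Import Defs.
From Stdlib Require Import Reals List Arith Lra Lia.
From Stdlib Require Import FunctionalExtensionality ClassicalEpsilon ProofIrrelevance Classical.
From Coquelicot Require Import Coquelicot.
Import ListNotations.
Open Scope R_scope.

Record LieA := {
  car : Type;
  ladd : car -> car -> car;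
  lscal : R -> car -> car;
  l0 : car;
  lbr : car -> car -> car;
  Ix : Type;
  ev : Ix -> car -> R;
  ev_add : forall i x y, ev i (ladd x y) = ev i x + ev i y;
  ev_scal : forall i r x, ev i (lscal r x) = r * ev i x;
  ev_0 : forall i, ev i l0 = 0;
  sep : forall x y, (forall i, ev i x = ev i y) -> x = y;
  br_addl : forall x y w, lbr (ladd x y) w = ladd (lbr x w) (lbr y w);
  br_addr : forall x y w, lbr w (ladd x y) = ladd (lbr w x) (lbr w y);
  br_scall : forall r x w, lbr (lscal r x) w = lscal r (lbr x w);
  br_scalr : forall r x w, lbr w (lscal r x) = lscal r (lbr w x);
  br_0l : forall w, lbr l0 w = l0;
  br_0r : forall w, lbr w l0 = l0;
  br_anti : forall i x y, ev i (lbr x y) = - ev i (lbr y x);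
  br_jac : forall i x y w,
    ev i (lbr x (lbr y w)) + ev i (lbr y (lbr w x)) + ev i (lbr w (lbr x y)) = 0 }.

Arguments ladd {_} _ _. Arguments lscal {_} _ _. Arguments l0 {_}. Arguments lbr {_} _ _.
Arguments ev {_} _ _. Arguments sep {_} _ _ _.
Arguments ev_add {_} _ _ _. Arguments ev_scal {_} _ _ _. Arguments ev_0 {_} _.
Arguments br_addl {_} _ _ _. Arguments br_addr {_} _ _ _. Arguments br_scall {_} _ _ _.
Arguments br_scalr {_} _ _ _. Arguments br_0l {_} _. Arguments br_0r {_} _.
Arguments br_anti {_} _ _ _. Arguments br_jac {_} _ _ _ _.


Definition additive {L : LieA} (f : car L -> car L) :=
  (forall u v, f (ladd u v) = ladd (f u) (f v)) /\ (forall r u, f (lscal r u) = lscal r (f u))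
  /\ f l0 = l0.

Lemma ctx_anti {L : LieA} (f : car L -> car L) (Hf : additive f) i x y :
  ev i (f (lbr x y)) + ev i (f (lbr y x)) = 0.
Proof.
  destruct Hf as [Ha [Hs H0]].
  assert (E : lbr x y = lscal (-1) (lbr y x)).
  { apply sep; intro j; rewrite ev_scal, br_anti; ring. }
  rewrite E, Hs, ev_scal; ring.
Qed.

Lemma ctx_self {L : LieA} (f : car L -> car L) (Hf : additive f) i x :
  ev i (f (lbr x x)) = 0.
Proof. pose proof (ctx_anti f Hf i x x). lra. Qed.

Lemma ctx_jac {L : LieA} (f : car L -> car L) (Hf : additive f) i x y w :
  ev i (f (lbr x (lbr y w))) + ev i (f (lbr y (lbr w x))) + ev i (f (lbr w (lbr x y))) = 0.
Proof.
  destruct Hf as [Ha [Hs H0]].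
  assert (E : ladd (lbr x (lbr y w)) (ladd (lbr y (lbr w x)) (lbr w (lbr x y))) = l0).
  { apply sep; intro j; rewrite !ev_add, ev_0. pose proof (br_jac j x y w). lra. }
  assert (E2 := f_equal f E). rewrite !Ha, H0 in E2.
  assert (E3 := f_equal (ev i) E2). rewrite !ev_add, ev_0 in E3. lra.
Qed.

Lemma ctx_zero {L : LieA} (f : car L -> car L) (Hf : additive f) i x y :
  lbr x y = l0 -> ev i (f (lbr x y)) = 0.
Proof. destruct Hf as [Ha [Hs H0]]. intros E; rewrite E, H0, ev_0; reflexivity. Qed.

Ltac lin_tac := repeat split; intros; cbv beta;
  repeat first [rewrite br_addl | rewrite br_addr | rewrite br_scall | rewrite br_scalr
               | rewrite br_0l | rewrite br_0r]; reflexivity.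

Lemma additive_id {L : LieA} : additive (fun u : car L => u).
Proof. lin_tac. Qed.

Definition ser (L : LieA) := nat -> car L.
Definition csum {L : LieA} (n : nat) (f : nat -> car L) : car L :=
  fold_right ladd l0 (map f (seq 0 n)).
Definition lsbr {L : LieA} (A B : ser L) : ser L := fun k =>
  csum (S k) (fun j => lbr (A j) (B (k - j)%nat)).
Definition lsadd {L : LieA} (A B : ser L) : ser L := fun k => ladd (A k) (B k).
Definition lsscal {L : LieA} (c : R) (A : ser L) : ser L := fun k => lscal c (A k).
Definition lbch {L : LieA} (X Y : ser L) : ser L :=
  let XY := lsbr X Y in
  lsadd (lsadd (lsadd X Y) (lsscal (1/2) XY))
   (lsadd (lsadd (lsscal (1/12) (lsbr X XY)) (lsscal (-1/12) (lsbr Y XY)))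
         (lsscal (-1/24) (lsbr Y (lsbr X XY)))).
Definition lmono {L : LieA} (u : car L) : ser L := fun k => if Nat.eqb k 1 then u else l0.
Definition lszero {L : LieA} : ser L := fun _ => l0.
Definition eq4 {L : LieA} (A B : ser L) := forall k, (k <= 4)%nat -> A k = B k.

Ltac expand_lie :=
  repeat first [rewrite br_addl | rewrite br_addr | rewrite br_scall | rewrite br_scalr
               | rewrite br_0l | rewrite br_0r];
  repeat first [rewrite ev_add | rewrite ev_scal | rewrite ev_0].

Ltac lie_unfold := unfold lbch, lsbr, lsadd, lsscal, lmono, lszero, csum; simpl.

Notation "a +l b" := (ladd a b) (at level 50, left associativity).
Notation "r *l a" := (lscal r a) (at level 40, left associativity).

Definition bR {L : LieA} (k : nat) (A : ser L) (y : car L) : car L :=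
  match k with
  | 0 => l0
  | 1 => A 1%nat +l y
  | 2 => A 2%nat +l (1/2) *l (lbr (A 1%nat) (y))
  | 3 => A 3%nat +l (1/2) *l (lbr (A 2%nat) (y)) +l (1/12) *l (lbr (A 1%nat) ((lbr (A 1%nat) (y))))
         +l (-1/12) *l (lbr (y) ((lbr (A 1%nat) (y))))
  | 4 => A 4%nat +l (1/2) *l (lbr (A 3%nat) (y)) +l (1/12) *l (lbr (A 1%nat) ((lbr (A 2%nat) (y))))
         +l (1/12) *l (lbr (A 2%nat) ((lbr (A 1%nat) (y)))) +l (-1/12) *l (lbr (y) ((lbr (A 2%nat) (y))))
         +l (-1/24) *l (lbr (y) ((lbr (A 1%nat) ((lbr (A 1%nat) (y))))))
  | _ => l0
  end.

Definition bL {L : LieA} (k : nat) (x : car L) (B : ser L) : car L :=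
  match k with
  | 0 => l0
  | 1 => x +l B 1%nat
  | 2 => B 2%nat +l (1/2) *l (lbr (x) (B 1%nat))
  | 3 => B 3%nat +l (1/2) *l (lbr (x) (B 2%nat)) +l (1/12) *l (lbr (x) ((lbr (x) (B 1%nat))))
         +l (-1/12) *l (lbr (B 1%nat) ((lbr (x) (B 1%nat))))
  | 4 => B 4%nat +l (1/2) *l (lbr (x) (B 3%nat)) +l (1/12) *l (lbr (x) ((lbr (x) (B 2%nat))))
         +l (-1/12) *l (lbr (B 1%nat) ((lbr (x) (B 2%nat)))) +l (-1/12) *l (lbr (B 2%nat) ((lbr (x) (B 1%nat))))
         +l (-1/24) *l (lbr (B 1%nat) ((lbr (x) ((lbr (x) (B 1%nat))))))
  | _ => l0
  end.

Lemma bR_ok {L : LieA} (A : ser L) (y : car L) : A 0%nat = l0 ->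
  forall k, (k <= 4)%nat -> lbch A (lmono y) k = bR k A y.
Proof.
  intros HA k Hk.
  destruct k as [|[|[|[|[|k]]]]]; [| | | | | lia];
  apply sep; intro i; lie_unfold; rewrite ?HA; expand_lie; lra.
Qed.

Lemma bL_ok {L : LieA} (x : car L) (B : ser L) : B 0%nat = l0 ->
  forall k, (k <= 4)%nat -> lbch (lmono x) B k = bL k x B.
Proof.
  intros HB k Hk.
  destruct k as [|[|[|[|[|k]]]]]; [| | | | | lia];
  apply sep; intro i; lie_unfold; rewrite ?HB; expand_lie; lra.
Qed.

Lemma G1_core {L : LieA} (x y : car L) (F : ser L) k : (k <= 4)%nat ->
  bR k (fun j => bL j x F) y = bL k x (fun j => bR j F y).
Proof.
  intros Hk.
  destruct k as [|[|[|[|[|k]]]]]; [| | | | | lia]; cbn [bR bL].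
  - apply sep; intro i; cbn [bR bL]; expand_lie.

    lra.
  - apply sep; intro i; cbn [bR bL]; expand_lie.

    lra.
  - apply sep; intro i; cbn [bR bL]; expand_lie.

    lra.
  - apply sep; intro i; cbn [bR bL]; expand_lie.
    pose proof (ctx_anti (fun u => (lbr x u)) ltac:(lin_tac) i (F 1%nat) y) as C0; cbv beta in C0.
    pose proof (ctx_anti (fun u => u) ltac:(lin_tac) i y (lbr x (F 1%nat))) as C1; cbv beta in C1.
    pose proof (ctx_anti (fun u => (lbr y u)) ltac:(lin_tac) i x (F 1%nat)) as C2; cbv beta in C2.
    pose proof (ctx_jac (fun u => u) ltac:(lin_tac) i x y (F 1%nat)) as C3; cbv beta in C3.
    lra.
  - apply sep; intro i; cbn [bR bL]; expand_lie.
    pose proof (ctx_anti (fun u => u) ltac:(lin_tac) i y (lbr x (F 2%nat))) as C0; cbv beta in C0.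
    pose proof (ctx_jac (fun u => u) ltac:(lin_tac) i (F 2%nat) y x) as C1; cbv beta in C1.
    pose proof (ctx_jac (fun u => u) ltac:(lin_tac) i (F 1%nat) (lbr (F 1%nat) y) x) as C2; cbv beta in C2.
    pose proof (ctx_anti (fun u => u) ltac:(lin_tac) i (lbr x (F 1%nat)) (lbr x y)) as C3; cbv beta in C3.
    pose proof (ctx_jac (fun u => u) ltac:(lin_tac) i x y (lbr x (F 1%nat))) as C4; cbv beta in C4.
    pose proof (ctx_anti (fun u => (lbr (lbr x (F 1%nat)) u)) ltac:(lin_tac) i x y) as C5; cbv beta in C5.
    pose proof (ctx_anti (fun u => (lbr (F 1%nat) u)) ltac:(lin_tac) i x (lbr (F 1%nat) y)) as C6; cbv beta in C6.
    pose proof (ctx_jac (fun u => (lbr y u)) ltac:(lin_tac) i x y (F 1%nat)) as C7; cbv beta in C7.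
    pose proof (ctx_anti (fun u => u) ltac:(lin_tac) i y (lbr x (lbr x (F 1%nat)))) as C8; cbv beta in C8.
    pose proof (ctx_jac (fun u => u) ltac:(lin_tac) i (lbr x (F 1%nat)) y x) as C9; cbv beta in C9.
    pose proof (ctx_anti (fun u => (lbr y u)) ltac:(lin_tac) i x (lbr x (F 1%nat))) as C10; cbv beta in C10.
    pose proof (ctx_anti (fun u => (lbr (F 1%nat) u)) ltac:(lin_tac) i x (lbr x y)) as C11; cbv beta in C11.
    pose proof (ctx_jac (fun u => u) ltac:(lin_tac) i (lbr x (F 1%nat)) y (F 1%nat)) as C12; cbv beta in C12.
    pose proof (ctx_anti (fun u => u) ltac:(lin_tac) i (lbr (F 1%nat) y) (lbr x (F 1%nat))) as C13; cbv beta in C13.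
    pose proof (ctx_anti (fun u => (lbr (F 2%nat) u)) ltac:(lin_tac) i x y) as C14; cbv beta in C14.
    pose proof (ctx_anti (fun u => (lbr (lbr x (F 1%nat)) u)) ltac:(lin_tac) i (F 1%nat) y) as C15; cbv beta in C15.
    pose proof (ctx_jac (fun u => u) ltac:(lin_tac) i y (lbr (F 1%nat) y) x) as C16; cbv beta in C16.
    pose proof (ctx_jac (fun u => (lbr x u)) ltac:(lin_tac) i y x (F 1%nat)) as C17; cbv beta in C17.
    pose proof (ctx_anti (fun u => (lbr y (lbr u y))) ltac:(lin_tac) i x (F 1%nat)) as C18; cbv beta in C18.
    pose proof (ctx_anti (fun u => u) ltac:(lin_tac) i (lbr (F 1%nat) (lbr x (F 1%nat))) y) as C19; cbv beta in C19.
    pose proof (ctx_anti (fun u => (lbr x (lbr (F 1%nat) u))) ltac:(lin_tac) i y x) as C20; cbv beta in C20.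
    pose proof (ctx_anti (fun u => (lbr y u)) ltac:(lin_tac) i y (lbr (F 1%nat) x)) as C21; cbv beta in C21.
    pose proof (ctx_anti (fun u => (lbr y (lbr u x))) ltac:(lin_tac) i (F 1%nat) y) as C22; cbv beta in C22.
    pose proof (ctx_jac (fun u => u) ltac:(lin_tac) i x (F 1%nat) (lbr x y)) as C23; cbv beta in C23.
    pose proof (ctx_anti (fun u => (lbr y u)) ltac:(lin_tac) i x (lbr y (F 1%nat))) as C24; cbv beta in C24.
    lra.
Qed.

Definition s3 {L : LieA} (u w : car L) : car L :=
  (-1/6) *l (lbr u (lbr u w) +l lbr w (lbr u w)).
Definition PSk {L : LieA} (k : nat) (p1 p3 : car L) : car L :=
  match k with 1 => p1 | 3 => p3 | _ => l0 end.
Lemma G2_core {L : LieA} (y : car L) (Z : ser L) k : (k <= 4)%nat ->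
  Z 0%nat = l0 -> Z 2%nat = l0 -> Z 4%nat = l0 ->
  bR k (fun j => bL j y Z) y = PSk k (2 *l y +l Z 1%nat) (Z 3%nat +l s3 y (Z 1%nat)).
Proof.
  intros Hk H0 H2 H4.
  destruct k as [|[|[|[|[|k]]]]]; [| | | | | lia]; cbn [bR bL PSk].
  - apply sep; intro i; cbn [bR bL PSk]; unfold s3; rewrite ?H0, ?H2, ?H4; expand_lie.

    lra.
  - apply sep; intro i; cbn [bR bL PSk]; unfold s3; rewrite ?H0, ?H2, ?H4; expand_lie.

    lra.
  - apply sep; intro i; cbn [bR bL PSk]; unfold s3; rewrite ?H0, ?H2, ?H4; expand_lie.
    pose proof (ctx_anti (fun u => u) ltac:(lin_tac) i (Z 1%nat) y) as C0; cbv beta in C0.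
    pose proof (ctx_self (fun u => u) ltac:(lin_tac) i y) as C1; cbv beta in C1.
    lra.
  - apply sep; intro i; cbn [bR bL PSk]; unfold s3; rewrite ?H0, ?H2, ?H4; expand_lie.
    pose proof (ctx_anti (fun u => (lbr (Z 1%nat) u)) ltac:(lin_tac) i y (Z 1%nat)) as C0; cbv beta in C0.
    pose proof (ctx_anti (fun u => u) ltac:(lin_tac) i (lbr y (Z 1%nat)) y) as C1; cbv beta in C1.
    pose proof (ctx_jac (fun u => u) ltac:(lin_tac) i y (Z 1%nat) y) as C2; cbv beta in C2.
    pose proof (ctx_anti (fun u => (lbr y u)) ltac:(lin_tac) i y (Z 1%nat)) as C3; cbv beta in C3.
    lra.
  - apply sep; intro i; cbn [bR bL PSk]; unfold s3; rewrite ?H0, ?H2, ?H4; expand_lie.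
    pose proof (ctx_anti (fun u => u) ltac:(lin_tac) i y (Z 3%nat)) as C0; cbv beta in C0.
    pose proof (ctx_anti (fun u => u) ltac:(lin_tac) i (lbr y (Z 1%nat)) (lbr (Z 1%nat) y)) as C1; cbv beta in C1.
    pose proof (ctx_anti (fun u => (lbr (lbr y (Z 1%nat)) u)) ltac:(lin_tac) i (Z 1%nat) y) as C2; cbv beta in C2.
    pose proof (ctx_anti (fun u => u) ltac:(lin_tac) i (lbr y (lbr y (Z 1%nat))) y) as C3; cbv beta in C3.
    pose proof (ctx_anti (fun u => u) ltac:(lin_tac) i (lbr (Z 1%nat) (lbr y (Z 1%nat))) y) as C4; cbv beta in C4.
    pose proof (ctx_anti (fun u => (lbr (lbr (Z 1%nat) u) y)) ltac:(lin_tac) i y (Z 1%nat)) as C5; cbv beta in C5.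
    pose proof (ctx_self (fun u => (lbr (lbr y (Z 1%nat)) u)) ltac:(lin_tac) i y) as C6; cbv beta in C6.
    pose proof (ctx_jac (fun u => (lbr y u)) ltac:(lin_tac) i y y (Z 1%nat)) as C7; cbv beta in C7.
    pose proof (ctx_jac (fun u => (lbr y u)) ltac:(lin_tac) i y y y) as C8; cbv beta in C8.
    pose proof (ctx_anti (fun u => u) ltac:(lin_tac) i y (lbr (Z 1%nat) (lbr (Z 1%nat) y))) as C9; cbv beta in C9.
    pose proof (ctx_jac (fun u => u) ltac:(lin_tac) i (lbr (Z 1%nat) y) y (Z 1%nat)) as C10; cbv beta in C10.
    pose proof (ctx_anti (fun u => (lbr (Z 1%nat) u)) ltac:(lin_tac) i y (lbr y (Z 1%nat))) as C11; cbv beta in C11.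
    pose proof (ctx_jac (fun u => u) ltac:(lin_tac) i (lbr y (Z 1%nat)) y (Z 1%nat)) as C12; cbv beta in C12.
    pose proof (ctx_anti (fun u => (lbr (Z 1%nat) (lbr u y))) ltac:(lin_tac) i y (Z 1%nat)) as C13; cbv beta in C13.
    lra.
Qed.

Lemma lbch0 {L : LieA} (A B : ser L) : A 0%nat = l0 -> B 0%nat = l0 -> lbch A B 0%nat = l0.
Proof. intros HA HB. apply sep; intro i; lie_unfold; rewrite HA, HB; expand_lie; lra. Qed.

Lemma lbch_ext {L : LieA} (A A' B B' : ser L) : eq4 A A' -> eq4 B B' -> eq4 (lbch A B) (lbch A' B').
Proof.
  intros HA HB k Hk.
  assert (a0 := HA 0%nat ltac:(lia)); assert (a1 := HA 1%nat ltac:(lia)); assert (a2 := HA 2%nat ltac:(lia));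
  assert (a3 := HA 3%nat ltac:(lia)); assert (a4 := HA 4%nat ltac:(lia)).
  assert (b0 := HB 0%nat ltac:(lia)); assert (b1 := HB 1%nat ltac:(lia)); assert (b2 := HB 2%nat ltac:(lia));
  assert (b3 := HB 3%nat ltac:(lia)); assert (b4 := HB 4%nat ltac:(lia)).
  destruct k as [|[|[|[|[|k]]]]]; [| | | | | lia]; lie_unfold;
  rewrite ?a0, ?a1, ?a2, ?a3, ?a4, ?b0, ?b1, ?b2, ?b3, ?b4; reflexivity.
Qed.

Lemma bR_ext {L : LieA} k (A A' : ser L) y : eq4 A A' -> bR k A y = bR k A' y.
Proof.
  intros HA.
  assert (a1 := HA 1%nat ltac:(lia)); assert (a2 := HA 2%nat ltac:(lia));
  assert (a3 := HA 3%nat ltac:(lia)); assert (a4 := HA 4%nat ltac:(lia)).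
  destruct k as [|[|[|[|[|k]]]]]; cbn [bR]; rewrite ?a1, ?a2, ?a3, ?a4; reflexivity.
Qed.

Lemma bL_ext {L : LieA} k (A A' : ser L) y : eq4 A A' -> bL k y A = bL k y A'.
Proof.
  intros HA.
  assert (a1 := HA 1%nat ltac:(lia)); assert (a2 := HA 2%nat ltac:(lia));
  assert (a3 := HA 3%nat ltac:(lia)); assert (a4 := HA 4%nat ltac:(lia)).
  destruct k as [|[|[|[|[|k]]]]]; cbn [bL]; rewrite ?a1, ?a2, ?a3, ?a4; reflexivity.
Qed.

Lemma eq4_trans {L : LieA} (A B C : ser L) : eq4 A B -> eq4 B C -> eq4 A C.
Proof. intros H1 H2 k Hk; rewrite H1, H2; auto. Qed.
Lemma eq4_sym {L : LieA} (A B : ser L) : eq4 A B -> eq4 B A.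
Proof. intros H1 k Hk; rewrite H1; auto. Qed.
Lemma eq4_refl {L : LieA} (A : ser L) : eq4 A A.
Proof. intros k Hk; reflexivity. Qed.

Lemma G1 {L : LieA} (x y : car L) (F : ser L) : F 0%nat = l0 ->
  eq4 (lbch (lbch (lmono x) F) (lmono y)) (lbch (lmono x) (lbch F (lmono y))).
Proof.
  intros HF k Hk.
  assert (H0 : lbch (lmono x) F 0%nat = l0) by (apply lbch0; auto).
  assert (H0' : lbch F (lmono y) 0%nat = l0) by (apply lbch0; auto).
  rewrite (bR_ok _ _ H0 k Hk), (bL_ok _ _ H0' k Hk).
  rewrite (bR_ext k _ (fun j => bL j x F)).
  2:{ intros j Hj; apply bL_ok; auto. }
  rewrite (bL_ext k _ (fun j => bR j F y)).
  2:{ intros j Hj; apply bR_ok; auto. }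
  apply G1_core; auto.
Qed.

Lemma lmono0 {L : LieA} (u : car L) : lmono u 0%nat = l0.
Proof. reflexivity. Qed.

Lemma fold0 {L : LieA} (ls : list (car L)) (A : ser L) :
  A 0%nat = l0 -> fold_left lbch (map lmono ls) A 0%nat = l0.
Proof.
  revert A; induction ls as [|u ls IH]; intros A HA; simpl; auto.
  apply IH. apply lbch0; auto.
Qed.

Lemma fold_ext {L : LieA} (ls : list (ser L)) (A A' : ser L) :
  eq4 A A' -> eq4 (fold_left lbch ls A) (fold_left lbch ls A').
Proof.
  revert A A'; induction ls as [|u ls IH]; intros A A' HA; simpl; auto.
  apply IH. apply lbch_ext; auto. apply eq4_refl.
Qed.

Lemma lbch_r0 {L : LieA} (x : car L) : eq4 (lbch (lmono x) lszero) (lmono x).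
Proof.
  intros k Hk; destruct k as [|[|[|[|[|k]]]]]; [| | | | | lia];
  apply sep; intro i; lie_unfold; expand_lie; lra.
Qed.

Lemma lbch_l0 {L : LieA} (x : car L) : eq4 (lbch lszero (lmono x)) (lmono x).
Proof.
  intros k Hk; destruct k as [|[|[|[|[|k]]]]]; [| | | | | lia];
  apply sep; intro i; lie_unfold; expand_lie; lra.
Qed.

Lemma fold_from {L : LieA} (ls : list (car L)) (x : car L) :
  eq4 (fold_left lbch (map lmono ls) (lmono x))
      (lbch (lmono x) (fold_left lbch (map lmono ls) lszero)).
Proof.
  induction ls as [|y ls IH] using rev_ind.
  - simpl. apply eq4_sym, lbch_r0.
  - rewrite map_app, !fold_left_app. simpl.
    eapply eq4_trans. apply lbch_ext. apply IH. apply eq4_refl.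
    apply G1. apply fold0. reflexivity.
Qed.

Definition lbchl {L : LieA} (l : list (ser L)) : ser L := fold_left lbch l lszero.

Fixpoint P1 {L : LieA} (l : list (car L)) : car L :=
  match l with [] => l0 | u :: l' => 2 *l u +l P1 l' end.
Fixpoint P3 {L : LieA} (l : list (car L)) : car L :=
  match l with [] => l0 | u :: l' => P3 l' +l s3 u (P1 l') end.
Definition PSer {L : LieA} (l : list (car L)) : ser L := fun k => PSk k (P1 l) (P3 l).

Lemma pal_ok {L : LieA} (l : list (car L)) :
  eq4 (lbchl (map lmono (l ++ rev l))) (PSer l).
Proof.
  unfold lbchl. induction l as [|u l IH].
  - intros k Hk; destruct k as [|[|[|[|[|k]]]]]; reflexivity.
  - replace ((u :: l) ++ rev (u :: l)) with (u :: ((l ++ rev l) ++ [u]))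
      by (simpl; rewrite app_assoc; reflexivity).
    rewrite map_cons. simpl fold_left.
    eapply eq4_trans. apply fold_ext. apply lbch_l0.
    rewrite map_app, fold_left_app. simpl fold_left.
    eapply eq4_trans. apply lbch_ext. apply fold_from. apply eq4_refl.
    eapply eq4_trans. apply lbch_ext. apply lbch_ext. apply eq4_refl. apply IH. apply eq4_refl.
    intros k Hk.
    assert (H0 : lbch (lmono u) (PSer l) 0%nat = l0) by (apply lbch0; reflexivity).
    rewrite (bR_ok _ _ H0 k Hk).
    rewrite (bR_ext k _ (fun j => bL j u (PSer l))).
    2:{ intros j Hj; apply bL_ok; auto. }
    rewrite G2_core; auto.
Qed.

Definition Qf {L : LieA} (TT W D : car L) : car L :=
  (1/24) *l lbr TT (lbr TT W) +l (1/16) *l lbr W (lbr TT W) +l (-1/48) *l D.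

Lemma block_step {L : LieA} (tp tr v w hp TT D : car L) :
  hp = tp +l v -> TT = tp +l tr -> lbr tr v = l0 -> lbr tr tp = l0 -> lbr v w = l0 ->
  (Qf TT w D +l s3 ((1/2) *l hp) w) +l s3 ((-1/2) *l tp) (2 *l ((1/2) *l hp) +l w)
  = Qf TT (v +l w) (D +l lbr v (lbr v TT)).
Proof.
  intros Hh HT R1 R2 R3.
  assert (R1' : lbr v tr = l0) by (apply sep; intro i; rewrite br_anti, R1, ?ev_0; lra).
  assert (R2' : lbr tp tr = l0) by (apply sep; intro i; rewrite br_anti, R2, ?ev_0; lra).
  assert (R3' : lbr w v = l0) by (apply sep; intro i; rewrite br_anti, R3, ?ev_0; lra).
  subst hp TT. apply sep; intro i; unfold Qf, s3; expand_lie.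
  pose proof (ctx_jac (fun u => u) ltac:(lin_tac) i tp v tr) as C0; cbv beta in C0.
  pose proof (ctx_zero (fun u => (lbr v u)) ltac:(lin_tac) i v w R3) as C1; cbv beta in C1.
  pose proof (ctx_zero (fun u => (lbr tr u)) ltac:(lin_tac) i tr v R1) as C2; cbv beta in C2.
  pose proof (ctx_anti (fun u => (lbr tp u)) ltac:(lin_tac) i tr v) as C3; cbv beta in C3.
  pose proof (ctx_zero (fun u => (lbr tp u)) ltac:(lin_tac) i tr v R1) as C4; cbv beta in C4.
  pose proof (ctx_anti (fun u => (lbr v u)) ltac:(lin_tac) i v tr) as C5; cbv beta in C5.
  pose proof (ctx_zero (fun u => (lbr v u)) ltac:(lin_tac) i v tr R1') as C6; cbv beta in C6.
  pose proof (ctx_jac (fun u => u) ltac:(lin_tac) i tp tp tp) as C7; cbv beta in C7.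
  pose proof (ctx_jac (fun u => u) ltac:(lin_tac) i v w tp) as C8; cbv beta in C8.
  pose proof (ctx_anti (fun u => (lbr v u)) ltac:(lin_tac) i tp w) as C9; cbv beta in C9.
  pose proof (ctx_jac (fun u => u) ltac:(lin_tac) i tr v w) as C10; cbv beta in C10.
  pose proof (ctx_zero (fun u => (lbr w u)) ltac:(lin_tac) i tr v R1) as C11; cbv beta in C11.
  pose proof (ctx_anti (fun u => (lbr v u)) ltac:(lin_tac) i v tp) as C12; cbv beta in C12.
  pose proof (ctx_anti (fun u => (lbr v u)) ltac:(lin_tac) i tr w) as C13; cbv beta in C13.
  pose proof (ctx_self (fun u => (lbr w u)) ltac:(lin_tac) i tp) as C14; cbv beta in C14.
  pose proof (ctx_zero (fun u => (lbr tp u)) ltac:(lin_tac) i v w R3) as C15; cbv beta in C15.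
  pose proof (ctx_self (fun u => (lbr v u)) ltac:(lin_tac) i tp) as C16; cbv beta in C16.
  pose proof (ctx_zero (fun u => (lbr w u)) ltac:(lin_tac) i v w R3) as C17; cbv beta in C17.
  pose proof (ctx_zero (fun u => (lbr v u)) ltac:(lin_tac) i tr tp R2) as C18; cbv beta in C18.
  pose proof (ctx_zero (fun u => (lbr tr u)) ltac:(lin_tac) i v w R3) as C19; cbv beta in C19.
  lra.
Qed.
Lemma final_id {L : LieA} (TT Vc Vs D : car L) i :
  lbr Vc Vs = l0 ->
  ev i ((Qf TT Vs D +l s3 ((1/2) *l Vc) Vs) +l s3 ((1/2) *l TT) (2 *l ((1/2) *l Vc) +l Vs))
  = - 1/24 * ev i (lbr TT (lbr TT Vc)) + 1/12 * ev i (lbr Vc (lbr Vc TT))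
    + 1/6 * ev i (lbr Vc (lbr Vs TT)) + 1/48 * (ev i (lbr Vs (lbr Vs TT)) - ev i D).
Proof.
  intros R1.
  assert (R1' : lbr Vs Vc = l0) by (apply sep; intro j; rewrite br_anti, R1, ?ev_0; lra).
  unfold Qf, s3; expand_lie.
  pose proof (ctx_jac (fun u => u) ltac:(lin_tac) i TT Vc Vs) as C0; cbv beta in C0.
  pose proof (ctx_zero (fun u => (lbr Vc u)) ltac:(lin_tac) i Vc Vs R1) as C1; cbv beta in C1.
  pose proof (ctx_zero (fun u => (lbr Vs u)) ltac:(lin_tac) i Vc Vs R1) as C2; cbv beta in C2.
  pose proof (ctx_anti (fun u => (lbr Vc u)) ltac:(lin_tac) i TT Vs) as C3; cbv beta in C3.
  pose proof (ctx_anti (fun u => (lbr Vs u)) ltac:(lin_tac) i TT Vs) as C4; cbv beta in C4.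
  pose proof (ctx_anti (fun u => (lbr Vc u)) ltac:(lin_tac) i Vc TT) as C5; cbv beta in C5.
  pose proof (ctx_zero (fun u => (lbr TT u)) ltac:(lin_tac) i Vc Vs R1) as C6; cbv beta in C6.
  lra.
Qed.

Definition blocks {L : LieA} (tpf hpf : nat * nat -> car L) (S : list (nat * nat)) : list (car L) :=
  flat_map (fun p => [(-1/2) *l tpf p; (1/2) *l hpf p]) S.
Definition VS {L : LieA} (vf : nat * nat -> car L) (S : list (nat * nat)) : car L :=
  fold_right (fun p acc => vf p +l acc) l0 S.
Definition DS {L : LieA} (vf : nat * nat -> car L) (TT : car L) (S : list (nat * nat)) : car L :=
  fold_right (fun p acc => acc +l lbr (vf p) (lbr (vf p) TT)) l0 S.

Lemma P1_blocks {L : LieA} tpf hpf vf S :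
  (forall p, In p S -> hpf p = tpf p +l vf p) -> P1 (blocks (L:=L) tpf hpf S) = VS vf S.
Proof.
  induction S as [|p S IH]; intros H; simpl; auto.
  rewrite IH by (intros; apply H; simpl; auto).
  rewrite (H p) by (simpl; auto).
  apply sep; intro i; rewrite !ev_add, !ev_scal, !ev_add; lra.
Qed.

Lemma VS_comm {L : LieA} (v : car L) vf S :
  (forall q, In q S -> lbr v (vf q) = l0) -> lbr v (VS vf S) = l0.
Proof.
  induction S as [|q S IH]; intros H; simpl. apply br_0r.
  rewrite br_addr, (H q (or_introl eq_refl)), IH by (intros; apply H; simpl; auto).
  apply sep; intro i; rewrite ev_add, ev_0; lra.
Qed.

Lemma Qf0 {L : LieA} (TT : car L) : Qf TT l0 l0 = l0.
Proof. apply sep; intro i; unfold Qf; expand_lie; lra. Qed.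

Lemma P3_blocks {L : LieA} tpf hpf trf vf (TT : car L) S :
  (forall p, In p S -> hpf p = tpf p +l vf p) ->
  (forall p, In p S -> TT = tpf p +l trf p) ->
  (forall p, In p S -> lbr (trf p) (vf p) = l0) ->
  (forall p, In p S -> lbr (trf p) (tpf p) = l0) ->
  (forall p q, In p S -> In q S -> lbr (vf p) (vf q) = l0) ->
  P3 (blocks tpf hpf S) = Qf TT (VS vf S) (DS vf TT S).
Proof.
  induction S as [|p S IH]; intros H1 H2 H3 H4 H5.
  - simpl. symmetry; apply Qf0.
  - change (P3 (blocks tpf hpf (p :: S))) with
      ((P3 (blocks tpf hpf S) +l s3 ((1/2) *l hpf p) (P1 (blocks tpf hpf S)))
        +l s3 ((-1/2) *l tpf p) (2 *l ((1/2) *l hpf p) +l P1 (blocks tpf hpf S))).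
    rewrite IH; cycle 1.
    { intros; apply H1; simpl; auto. }
    { intros; apply H2; simpl; auto. }
    { intros; apply H3; simpl; auto. }
    { intros; apply H4; simpl; auto. }
    { intros; apply H5; simpl; auto. }
    rewrite (P1_blocks tpf hpf vf) by (intros; apply H1; simpl; auto).
    simpl VS; simpl DS.
    apply block_step with (tr := trf p); try (simpl; auto; fail).
    + apply H1; simpl; auto.
    + apply H2; simpl; auto.
    + apply H3; simpl; auto.
    + apply H4; simpl; auto.
    + apply VS_comm. intros q Hq. apply H5; simpl; auto.
Qed.

Lemma fold_plus_acc (l : list R) a : fold_right Rplus a l = fold_right Rplus 0 l + a.
Proof. induction l; simpl; [ring| rewrite IHl; ring]. Qed.

Lemma rsum_S n f : rsum (S n) f = rsum n f + f n.
Proof. unfold rsum. rewrite seq_S, map_app, fold_right_app. simpl. rewrite fold_plus_acc. ring. Qed.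

Lemma rsum_ext n f g : (forall i, (i < n)%nat -> f i = g i) -> rsum n f = rsum n g.
Proof.
  induction n; intros H; [reflexivity|].
  rewrite !rsum_S, (H n) by lia. rewrite IHn by (intros; apply H; lia). reflexivity.
Qed.

Lemma rsum_plus n f g : rsum n (fun i => f i + g i) = rsum n f + rsum n g.
Proof. induction n; [unfold rsum; simpl; ring|]. rewrite !rsum_S, IHn; ring. Qed.

Lemma rsum_minus n f g : rsum n (fun i => f i - g i) = rsum n f - rsum n g.
Proof. induction n; [unfold rsum; simpl; ring|]. rewrite !rsum_S, IHn; ring. Qed.

Lemma rsum_scal n c f : rsum n (fun i => c * f i) = c * rsum n f.
Proof. induction n; [unfold rsum; simpl; ring|]. rewrite !rsum_S, IHn; ring. Qed.

Lemma rsum_mult_r n c f : rsum n f * c = rsum n (fun i => f i * c).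
Proof. induction n; [unfold rsum; simpl; ring|]. rewrite !rsum_S, <- IHn; ring. Qed.

Lemma rsum_zero n f : (forall i, (i < n)%nat -> f i = 0) -> rsum n f = 0.
Proof.
  intros H. transitivity (rsum n (fun _ => 0)). apply rsum_ext; auto.
  induction n; [reflexivity|]. rewrite rsum_S, IHn by (intros; apply H; lia). ring.
Qed.

Lemma rsum_swap n m f : rsum n (fun i => rsum m (fun j => f i j)) = rsum m (fun j => rsum n (fun i => f i j)).
Proof.
  induction n.
  - unfold rsum at 1; simpl. symmetry; apply rsum_zero; intros; reflexivity.
  - rewrite rsum_S, IHn. rewrite <- rsum_plus. apply rsum_ext; intros. rewrite rsum_S; ring.
Qed.

Lemma rsum_split n a f : (a < n)%nat -> rsum n f = f a + rsum n (fun i => if Nat.eqb i a then 0 else f i).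
Proof.
  induction n; intros Ha; [lia|].
  rewrite !rsum_S. destruct (Nat.eq_dec a n) as [->|Hne].
  - rewrite Nat.eqb_refl. rewrite (rsum_ext n (fun i => if Nat.eqb i n then 0 else f i) f). 2:{ intros i Hi. destruct (Nat.eqb_spec i n); [lia|auto]. }
    ring.
  - rewrite IHn by lia. destruct (Nat.eqb_spec n a); [lia|]. ring.
Qed.

Definition coord := (bool * nat * nat)%type.
Definition updc (c : coord) (z : PS) (t : R) : PS :=
  match c with (b, i, a) => if b then (upd (fst z) i a t, snd z) else (fst z, upd (snd z) i a t) end.
Definition getc (c : coord) (z : PS) : R :=
  match c with (b, i, a) => if b then fst z i a else snd z i a end.
Definition Dc (c : coord) (f : PSfun) (z : PS) : R := Derive (fun t => f (updc c z t)) (getc c z).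

Lemma updc_id c z : updc c z (getc c z) = z.
Proof.
  destruct c as [[b i] a]; destruct z as [X P]; destruct b; simpl; f_equal;
  apply functional_extensionality; intro j; apply functional_extensionality; intro k; unfold upd;
  destruct (Nat.eqb_spec j i), (Nat.eqb_spec k a); subst; simpl; auto.
Qed.

Lemma line_coord c c' : (forall z t, getc c' (updc c z t) = t) \/ (forall z t, getc c' (updc c z t) = getc c' z).
Proof.
  destruct c as [[b i] a]; destruct c' as [[b' i'] a'].
  destruct b, b'; simpl; try (right; reflexivity); unfold upd;
  destruct (Nat.eqb_spec i' i), (Nat.eqb_spec a' a); simpl; auto.
Qed.

Lemma ex_derive_coord c c' z t0 : ex_derive (fun t => getc c' (updc c z t)) t0.
Proof.
  destruct (line_coord c c') as [H|H].
  - eapply ex_derive_ext. intro t; symmetry; apply (H z t). apply ex_derive_id.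
  - eapply ex_derive_ext. intro t; symmetry; apply (H z t). apply ex_derive_const.
Qed.

Lemma Dc_coord c c' : exists r, forall z, Dc c (getc c') z = r.
Proof.
  destruct (line_coord c c') as [H|H].
  - exists 1. intro z. unfold Dc. rewrite (Derive_ext _ (fun t => t)) by apply H. apply Derive_id.
  - exists 0. intro z. unfold Dc. rewrite (Derive_ext _ (fun _ => getc c' z)) by apply H. apply Derive_const.
Qed.

Definition dsq (z : PS) i j := rsum 3 (fun a => (fst z i a - fst z j a) ^ 2).
Definition UU (N : nat) (z : PS) : Prop :=
  forall i j, (i < N)%nat -> (j < N)%nat -> i <> j -> 0 < dsq z i j.

Lemma noncoll_UU N z : noncoll N z -> UU N z.
Proof.
  intros H i j Hi Hj Hij. destruct (H i j Hi Hj Hij) as [a [Ha Hne]].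
  unfold dsq, rsum; simpl.
  assert (Hp : forall x, 0 <= x ^ 2) by (intros; apply pow2_ge_0).
  assert (Hs : 0 < (fst z i a - fst z j a) ^ 2).
  { replace ((fst z i a - fst z j a) ^ 2) with (Rsqr (fst z i a - fst z j a)) by (unfold Rsqr; ring).
    apply Rsqr_pos_lt. lra. }
  pose proof (Hp (fst z i 0%nat - fst z j 0%nat)); pose proof (Hp (fst z i 1%nat - fst z j 1%nat));
  pose proof (Hp (fst z i 2%nat - fst z j 2%nat)).
  assert (a = 0 \/ a = 1 \/ a = 2)%nat as [ -> | [ -> | -> ] ] by lia; lra.
Qed.

Lemma exd_plus (f g : R -> R) x : ex_derive f x -> ex_derive g x -> ex_derive (fun t => f t + g t) x.
Proof. intros H1 H2; exact (ex_derive_plus f g x H1 H2). Qed.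
Lemma exd_minus (f g : R -> R) x : ex_derive f x -> ex_derive g x -> ex_derive (fun t => f t - g t) x.
Proof. intros H1 H2; exact (ex_derive_minus f g x H1 H2). Qed.
Lemma exd_mult (f g : R -> R) x : ex_derive f x -> ex_derive g x -> ex_derive (fun t => f t * g t) x.
Proof. intros H1 H2; exact (ex_derive_mult f g x H1 H2). Qed.
Lemma exd_const (a x : R) : ex_derive (fun _ => a) x.
Proof. exact (ex_derive_const a x). Qed.

Lemma ex_derive_dsq c z i j t0 : ex_derive (fun t => dsq (updc c z t) i j) t0.
Proof.
  unfold dsq, rsum; cbn [map seq fold_right].
  assert (Hc : forall a, ex_derive (fun t => fst (updc c z t) i a - fst (updc c z t) j a) t0).
  { intros a. apply exd_minus. exact (ex_derive_coord c (true, i, a) z t0).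
    exact (ex_derive_coord c (true, j, a) z t0). }
  apply exd_plus. apply ex_derive_pow, Hc.
  apply exd_plus. apply ex_derive_pow, Hc.
  apply exd_plus. apply ex_derive_pow, Hc. apply exd_const.
Qed.

Lemma cont_pos (f : R -> R) x : continuous f x -> 0 < f x -> locally x (fun t => 0 < f t).
Proof.
  intros Hc Hp. apply Hc. exists (mkposreal _ Hp). intros y Hy.
  change (Rabs (y - f x) < f x) in Hy. apply Rabs_def2 in Hy. simpl in Hy. lra.
Qed.

Lemma locally_forall_lt (x : R) n (P : nat -> R -> Prop) :
  (forall i, (i < n)%nat -> locally x (P i)) -> locally x (fun t => forall i, (i < n)%nat -> P i t).
Proof.
  induction n; intros H.
  - apply filter_forall. intros; lia.
  - eapply filter_imp. 2: apply filter_and; [apply IHn; intros; apply H; lia | apply (H n); lia].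
    intros t [H1 H2] i Hi. destruct (Nat.eq_dec i n) as [->|]; auto. apply H1; lia.
Qed.

Lemma UU_loc N c z : UU N z -> locally (getc c z) (fun t => UU N (updc c z t)).
Proof.
  intros Hz.
  apply filter_imp with (P := fun t => forall i, (i < N)%nat -> forall j, (j < N)%nat -> i <> j ->
                                0 < dsq (updc c z t) i j).
  { intros t H i j Hi Hj Hij; apply H; auto. }
  apply locally_forall_lt. intros i Hi.
  apply locally_forall_lt. intros j Hj.
  destruct (Nat.eq_dec i j) as [->|Hne].
  - apply filter_forall. intros t H; congruence.
  - eapply filter_imp. 2: apply (cont_pos (fun t => dsq (updc c z t) i j)).
    + intros t H _; exact H.
    + exact (ex_derive_continuous (fun t => dsq (updc c z t) i j) (getc c z) (ex_derive_dsq c z i j _)).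
    + rewrite updc_id; apply Hz; auto.
Qed.

Inductive Good (N : nat) : PSfun -> Prop :=
| Gc : forall r, Good N (fun _ => r)
| Gx : forall c, Good N (getc c)
| Gadd : forall f g, Good N f -> Good N g -> Good N (fun z => f z + g z)
| Gmul : forall f g, Good N f -> Good N g -> Good N (fun z => f z * g z)
| Gpow : forall f r, Good N f -> (forall z, UU N z -> 0 < f z) -> Good N (fun z => Rpower (f z) r)
| Gext : forall f g, Good N f -> (forall z, UU N z -> f z = g z) -> Good N g.

Definition Sm N (f : PSfun) := forall c z, UU N z -> ex_derive (fun t : R => f (updc c z t)) (getc c z).

Lemma loc_eq N c z (f g : PSfun) : UU N z -> (forall w, UU N w -> f w = g w) ->
  locally (getc c z) (fun t => f (updc c z t) = g (updc c z t)).
Proof. intros Hz H. eapply filter_imp. 2: apply (UU_loc N c z Hz). intros t Ht; apply H; auto. Qed.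

Lemma Dc_loc N c z (f g : PSfun) : UU N z -> (forall w, UU N w -> f w = g w) -> Dc c f z = Dc c g z.
Proof. intros. unfold Dc. apply Derive_ext_loc. apply (loc_eq N); auto. Qed.

Lemma is_derive_Rpower r x : 0 < x -> is_derive (fun y => Rpower y r) x (r * Rpower x (r - 1)).
Proof. intros Hx. apply is_derive_Reals. apply derivable_pt_lim_power; auto. Qed.

Lemma ex_derive_Rpower r x : 0 < x -> ex_derive (fun y => Rpower y r) x.
Proof. intros Hx. eexists. apply is_derive_Rpower; auto. Qed.

Lemma Derive_Rpower r x : 0 < x -> Derive (fun y => Rpower y r) x = r * Rpower x (r - 1).
Proof. intros Hx. apply is_derive_unique. apply is_derive_Rpower; auto. Qed.

Lemma Sm_good N (f : PSfun) : Good N f -> Sm N f.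
Proof.
  induction 1; intros e z Hz.
  - apply exd_const.
  - apply ex_derive_coord.
  - apply exd_plus; auto.
  - apply exd_mult; auto.
  - assert (H1 : ex_derive (fun x => Rpower x r) (f (updc e z (getc e z)))).
    { rewrite updc_id. apply ex_derive_Rpower; auto. }
    exact (ex_derive_comp (fun x => Rpower x r) (fun t => f (updc e z t)) (getc e z) H1 (IHGood e z Hz)).
  - exact (ex_derive_ext_loc _ _ _ (loc_eq N e z f g Hz H0) (IHGood e z Hz)).
Qed.

Lemma Dc_plus N c z (f g : PSfun) : Sm N f -> Sm N g -> UU N z ->
  Dc c (fun w => f w + g w) z = Dc c f z + Dc c g z.
Proof. intros Hf Hg Hz. unfold Dc. exact (Derive_plus _ _ _ (Hf c z Hz) (Hg c z Hz)). Qed.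

Lemma Dc_minus N c z (f g : PSfun) : Sm N f -> Sm N g -> UU N z ->
  Dc c (fun w => f w - g w) z = Dc c f z - Dc c g z.
Proof. intros Hf Hg Hz. unfold Dc. exact (Derive_minus _ _ _ (Hf c z Hz) (Hg c z Hz)). Qed.

Lemma Dc_mult N c z (f g : PSfun) : Sm N f -> Sm N g -> UU N z ->
  Dc c (fun w => f w * g w) z = Dc c f z * g z + f z * Dc c g z.
Proof.
  intros Hf Hg Hz. unfold Dc. rewrite (Derive_mult _ _ _ (Hf c z Hz) (Hg c z Hz)).
  rewrite updc_id. reflexivity.
Qed.

Lemma Dc_const c z r : Dc c (fun _ => r) z = 0.
Proof. unfold Dc. apply Derive_const. Qed.

Lemma Dc_pow N c z (f : PSfun) r : Sm N f -> UU N z -> 0 < f z ->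
  Dc c (fun w => Rpower (f w) r) z = r * Rpower (f z) (r - 1) * Dc c f z.
Proof.
  intros Hf Hz Hp. unfold Dc.
  assert (H1 : ex_derive (fun x => Rpower x r) (f (updc c z (getc c z)))).
  { rewrite updc_id. apply ex_derive_Rpower; auto. }
  rewrite (Derive_comp (fun x => Rpower x r) (fun t => f (updc c z t)) (getc c z) H1 (Hf c z Hz)).
  rewrite updc_id, Derive_Rpower by auto. ring.
Qed.

Lemma Good_D N (f : PSfun) : Good N f -> forall e, Good N (Dc e f).
Proof.
  induction 1; intros e.
  - apply Gext with (fun _ => 0). apply Gc. intros; rewrite Dc_const; auto.
  - destruct (Dc_coord e c) as [r Hr]. apply Gext with (fun _ => r). apply Gc. intros; rewrite Hr; auto.
  - apply Gext with (fun z => Dc e f z + Dc e g z). apply Gadd; auto.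
    intros; rewrite (Dc_plus N); auto; apply Sm_good; auto.
  - apply Gext with (fun z => Dc e f z * g z + f z * Dc e g z). apply Gadd; apply Gmul; auto.
    intros; rewrite (Dc_mult N); auto; apply Sm_good; auto.
  - apply Gext with (fun z => (fun _ => r) z * (fun z => Rpower (f z) (r - 1)) z * Dc e f z).
    apply Gmul; [apply Gmul|]; auto. apply Gc. apply Gpow; auto.
    intros; rewrite (Dc_pow N); auto; apply Sm_good; auto.
  - apply Gext with (Dc e f); auto. intros; apply (Dc_loc N); auto.
Qed.

Lemma Sym_good N (f : PSfun) : Good N f -> forall e d z, UU N z -> Dc e (Dc d f) z = Dc d (Dc e f) z.
Proof.
  induction 1; intros e d z Hz.
  - rewrite (Dc_loc N e z (Dc d (fun _ => r)) (fun _ => 0)) by (auto; intros; apply Dc_const).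
    rewrite (Dc_loc N d z (Dc e (fun _ => r)) (fun _ => 0)) by (auto; intros; apply Dc_const).
    rewrite !Dc_const; auto.
  - destruct (Dc_coord d c) as [r1 H1]. destruct (Dc_coord e c) as [r2 H2].
    rewrite (Dc_loc N e z (Dc d (getc c)) (fun _ => r1)) by auto.
    rewrite (Dc_loc N d z (Dc e (getc c)) (fun _ => r2)) by auto.
    rewrite !Dc_const; auto.
  - assert (Sf := Sm_good N f H); assert (Sg := Sm_good N g H0).
    assert (Sdf := fun e => Sm_good N _ (Good_D N f H e)); assert (Sdg := fun e => Sm_good N _ (Good_D N g H0 e)).
    rewrite (Dc_loc N e z (Dc d (fun z => f z + g z)) (fun w => Dc d f w + Dc d g w)) by (auto; intros; apply (Dc_plus N); auto).
    rewrite (Dc_loc N d z (Dc e (fun z => f z + g z)) (fun w => Dc e f w + Dc e g w)) by (auto; intros; apply (Dc_plus N); auto).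
    rewrite !(Dc_plus N) by auto. rewrite IHGood1, IHGood2 by auto. reflexivity.
  - assert (Sf := Sm_good N f H); assert (Sg := Sm_good N g H0).
    assert (Sdf := fun e => Sm_good N _ (Good_D N f H e)); assert (Sdg := fun e => Sm_good N _ (Good_D N g H0 e)).
    rewrite (Dc_loc N e z (Dc d (fun z => f z * g z)) (fun w => Dc d f w * g w + f w * Dc d g w)) by (auto; intros; apply (Dc_mult N); auto).
    rewrite (Dc_loc N d z (Dc e (fun z => f z * g z)) (fun w => Dc e f w * g w + f w * Dc e g w)) by (auto; intros; apply (Dc_mult N); auto).
    assert (Sa : forall a1 a2 : coord, Sm N (fun w => Dc a1 f w * g w)) by (intros; apply Sm_good; apply Gmul; auto using Good_D).
    assert (Sb : forall a1 a2 : coord, Sm N (fun w => f w * Dc a2 g w)) by (intros; apply Sm_good; apply Gmul; auto using Good_D).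
    rewrite (Dc_plus N e z (fun w => Dc d f w * g w) (fun w => f w * Dc d g w)) by (auto; apply (Sa d d) || apply (Sb d d)).
    rewrite (Dc_plus N d z (fun w => Dc e f w * g w) (fun w => f w * Dc e g w)) by (auto; apply (Sa e e) || apply (Sb e e)).
    rewrite !(Dc_mult N) by auto. rewrite IHGood1, IHGood2 by auto. ring.
  - assert (Sf := Sm_good N f H).
    assert (Sdf := fun e => Sm_good N _ (Good_D N f H e)).
    assert (Sp : forall s, Sm N (fun w => Rpower (f w) s)) by (intros; apply Sm_good, Gpow; auto).
    assert (Sq : forall s, Sm N (fun w => s * Rpower (f w) (r - 1))) by (intros; apply Sm_good, Gmul; [apply Gc|apply Gpow; auto]).
    assert (E : forall a1 w, UU N w -> Dc a1 (fun w => Rpower (f w) r) w = (r * Rpower (f w) (r - 1)) * Dc a1 f w).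
    { intros; apply (Dc_pow N); auto. }
    rewrite (Dc_loc N e z _ _ Hz (E d)). rewrite (Dc_loc N d z _ _ Hz (E e)).
    rewrite (Dc_mult N e z (fun w => r * Rpower (f w) (r - 1)) (Dc d f)) by auto.
    rewrite (Dc_mult N d z (fun w => r * Rpower (f w) (r - 1)) (Dc e f)) by auto.
    assert (E2 : forall a1, Dc a1 (fun w => r * Rpower (f w) (r - 1)) z = r * ((r - 1) * Rpower (f z) (r - 1 - 1) * Dc a1 f z)).
    { intros a1. rewrite (Dc_mult N a1 z (fun _ => r) (fun w => Rpower (f w) (r - 1))) by (auto; intros ? ? ?; apply exd_const).
      rewrite Dc_const, (Dc_pow N) by auto. ring. }
    rewrite !E2, IHGood by auto. ring.
  - rewrite (Dc_loc N e z (Dc d g) (Dc d f)) by (auto; intros; apply (Dc_loc N); auto; intros; symmetry; auto).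
    rewrite (Dc_loc N d z (Dc e g) (Dc e f)) by (auto; intros; apply (Dc_loc N); auto; intros; symmetry; auto).
    apply IHGood; auto.
Qed.

Lemma Good_minus N (f g : PSfun) : Good N f -> Good N g -> Good N (fun z => f z - g z).
Proof.
  intros Hf Hg. apply Gext with (fun z => f z + (fun _ => -1) z * g z).
  apply Gadd; auto. apply Gmul; auto. apply Gc. intros; ring.
Qed.

Lemma Good_scal N r (f : PSfun) : Good N f -> Good N (fun z => r * f z).
Proof. intros Hf. apply (Gmul N (fun _ => r) f); auto. apply Gc. Qed.

Lemma Good_rsum N n (F : nat -> PSfun) : (forall i, (i < n)%nat -> Good N (F i)) ->
  Good N (fun z => rsum n (fun i => F i z)).
Proof.
  induction n; intros H.
  - apply Gext with (fun _ => 0). apply Gc. intros; reflexivity.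
  - apply Gext with (fun z => rsum n (fun i => F i z) + F n z).
    apply Gadd. apply IHn; intros; apply H; lia. apply H; lia.
    intros; rewrite rsum_S; reflexivity.
Qed.

Lemma Dc_rsum N c z n (F : nat -> PSfun) : (forall i, (i < n)%nat -> Good N (F i)) -> UU N z ->
  Dc c (fun w => rsum n (fun i => F i w)) z = rsum n (fun i => Dc c (F i) z).
Proof.
  induction n; intros H Hz.
  - unfold rsum; simpl. apply Dc_const.
  - rewrite (Dc_loc N c z _ (fun w => rsum n (fun i => F i w) + F n w)) by (auto; intros; apply rsum_S).
    assert (S1 : Sm N (fun w => rsum n (fun i => F i w))) by (apply Sm_good, Good_rsum; intros; apply H; lia).
    assert (S2 : Sm N (F n)) by (apply Sm_good, H; lia).
    rewrite (Dc_plus N) by auto.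
    rewrite IHn by (auto; intros; apply H; lia). rewrite rsum_S. reflexivity.
Qed.

Definition xc i a : coord := (true, i, a).
Definition pc i a : coord := (false, i, a).

Lemma pb_Dc N (A B : PSfun) z : pb N A B z =
  rsum N (fun i => rsum 3 (fun a => Dc (xc i a) A z * Dc (pc i a) B z - Dc (pc i a) A z * Dc (xc i a) B z)).
Proof. reflexivity. Qed.

Lemma Good_pb N (A B : PSfun) : Good N A -> Good N B -> Good N (pb N A B).
Proof.
  intros HA HB.
  apply Gext with (fun z => rsum N (fun i => rsum 3 (fun a => Dc (xc i a) A z * Dc (pc i a) B z - Dc (pc i a) A z * Dc (xc i a) B z))).
  2: intros; reflexivity.
  apply (Good_rsum N N (fun i z => rsum 3 (fun a => Dc (xc i a) A z * Dc (pc i a) B z - Dc (pc i a) A z * Dc (xc i a) B z))).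
  intros i Hi. apply (Good_rsum N 3 (fun a z => Dc (xc i a) A z * Dc (pc i a) B z - Dc (pc i a) A z * Dc (xc i a) B z)).
  intros a Ha. apply Good_minus; apply Gmul; apply Good_D; auto.
Qed.

Lemma pb_loc N (A A' B B' : PSfun) z : (forall w, UU N w -> A w = A' w) -> (forall w, UU N w -> B w = B' w) ->
  UU N z -> pb N A B z = pb N A' B' z.
Proof.
  intros HA HB Hz. rewrite !pb_Dc. apply rsum_ext; intros i _; apply rsum_ext; intros a _.
  rewrite (Dc_loc N (xc i a) z A A'), (Dc_loc N (pc i a) z A A'), (Dc_loc N (xc i a) z B B'), (Dc_loc N (pc i a) z B B'); auto.
Qed.

Lemma rsum_opp n f : - rsum n f = rsum n (fun i => - f i).
Proof. rewrite <- (Rmult_1_l (rsum n f)), Ropp_mult_distr_l, <- rsum_scal. apply rsum_ext; intros; ring. Qed.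

Lemma pb_anti N (A B : PSfun) z : pb N A B z = - pb N B A z.
Proof.
  rewrite !pb_Dc. rewrite rsum_opp.
  apply rsum_ext; intros i _. rewrite rsum_opp. apply rsum_ext; intros a _. ring.
Qed.

Lemma pb_addl N (A A' B : PSfun) z : Good N A -> Good N A' -> UU N z ->
  pb N (fun w => A w + A' w) B z = pb N A B z + pb N A' B z.
Proof.
  intros HA HA' Hz. rewrite !pb_Dc, <- rsum_plus. apply rsum_ext; intros i _.
  rewrite <- rsum_plus. apply rsum_ext; intros a _.
  rewrite !(Dc_plus N) by (auto; apply Sm_good; auto). ring.
Qed.

Lemma pb_addr N (A B B' : PSfun) z : Good N B -> Good N B' -> UU N z ->
  pb N A (fun w => B w + B' w) z = pb N A B z + pb N A B' z.
Proof.
  intros HB HB' Hz. rewrite !pb_Dc, <- rsum_plus. apply rsum_ext; intros i _.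
  rewrite <- rsum_plus. apply rsum_ext; intros a _.
  rewrite !(Dc_plus N) by (auto; apply Sm_good; auto). ring.
Qed.

Lemma Dc_scal N c z r (A : PSfun) : Good N A -> UU N z -> Dc c (fun w => r * A w) z = r * Dc c A z.
Proof.
  intros HA Hz. assert (S1 : Sm N (fun _ => r)) by (intros ? ? ?; apply exd_const).
  assert (S2 : Sm N A) by (apply Sm_good; auto).
  rewrite (Dc_mult N c z (fun _ => r) A) by auto.
  rewrite Dc_const; ring.
Qed.

Lemma pb_scall N r (A B : PSfun) z : Good N A -> UU N z -> pb N (fun w => r * A w) B z = r * pb N A B z.
Proof.
  intros HA Hz. rewrite !pb_Dc, <- rsum_scal. apply rsum_ext; intros i _.
  rewrite <- rsum_scal. apply rsum_ext; intros a _. rewrite !(Dc_scal N) by auto. ring.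
Qed.

Lemma pb_scalr N r (A B : PSfun) z : Good N B -> UU N z -> pb N A (fun w => r * B w) z = r * pb N A B z.
Proof.
  intros HA Hz. rewrite !pb_Dc, <- rsum_scal. apply rsum_ext; intros i _.
  rewrite <- rsum_scal. apply rsum_ext; intros a _. rewrite !(Dc_scal N) by auto. ring.
Qed.

Lemma pb_0l N (B : PSfun) z : pb N (fun _ => 0) B z = 0.
Proof. rewrite pb_Dc. apply rsum_zero; intros i _; apply rsum_zero; intros a _. rewrite !Dc_const; ring. Qed.

Lemma pb_0r N (A : PSfun) z : pb N A (fun _ => 0) z = 0.
Proof. rewrite pb_Dc. apply rsum_zero; intros i _; apply rsum_zero; intros a _. rewrite !Dc_const; ring. Qed.

Lemma Dc_pb N c (A B : PSfun) z : Good N A -> Good N B -> UU N z ->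
  Dc c (pb N A B) z = rsum N (fun j => rsum 3 (fun b =>
    (Dc c (Dc (xc j b) A) z * Dc (pc j b) B z + Dc (xc j b) A z * Dc c (Dc (pc j b) B) z)
    - (Dc c (Dc (pc j b) A) z * Dc (xc j b) B z + Dc (pc j b) A z * Dc c (Dc (xc j b) B) z))).
Proof.
  intros HA HB Hz.
  assert (G1 : forall j b, Good N (fun w => Dc (xc j b) A w * Dc (pc j b) B w - Dc (pc j b) A w * Dc (xc j b) B w)).
  { intros. apply Good_minus; apply Gmul; apply Good_D; auto. }
  change (pb N A B) with (fun w => rsum N (fun j => (fun j w => rsum 3 (fun b =>
     Dc (xc j b) A w * Dc (pc j b) B w - Dc (pc j b) A w * Dc (xc j b) B w)) j w)).
  rewrite (Dc_rsum N) by (auto; intros; apply (Good_rsum N 3 (fun b w => _)); intros; apply G1).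
  apply rsum_ext; intros j _.
  rewrite (Dc_rsum N c z 3 (fun b w => Dc (xc j b) A w * Dc (pc j b) B w - Dc (pc j b) A w * Dc (xc j b) B w))
    by (auto; intros; apply G1).
  apply rsum_ext; intros b _.
  assert (S1 : forall e (F : PSfun), Good N F -> Sm N (Dc e F)) by (intros; apply Sm_good, Good_D; auto).
  rewrite (Dc_minus N) by (auto; apply Sm_good; apply Gmul; apply Good_D; auto).
  rewrite !(Dc_mult N) by auto. reflexivity.
Qed.

Definition S4 N (F : nat -> nat -> nat -> nat -> R) : R :=
  rsum N (fun i => rsum 3 (fun a => rsum N (fun j => rsum 3 (fun b => F i a j b)))).

Lemma S4_plus N F G : S4 N (fun i a j b => F i a j b + G i a j b) = S4 N F + S4 N G.
Proof.
  unfold S4. rewrite <- rsum_plus. apply rsum_ext; intros. rewrite <- rsum_plus. apply rsum_ext; intros.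
  rewrite <- rsum_plus. apply rsum_ext; intros. rewrite <- rsum_plus. reflexivity.
Qed.

Lemma S4_zero N F : (forall i a j b, (i < N)%nat -> (a < 3)%nat -> (j < N)%nat -> (b < 3)%nat -> F i a j b = 0) ->
  S4 N F = 0.
Proof.
  intros H. unfold S4. apply rsum_zero; intros. apply rsum_zero; intros. apply rsum_zero; intros.
  apply rsum_zero; intros. apply H; auto.
Qed.

Lemma S4_swap N F : S4 N F = S4 N (fun i a j b => F j b i a).
Proof.
  unfold S4.
  transitivity (rsum N (fun i => rsum N (fun j => rsum 3 (fun a => rsum 3 (fun b => F i a j b))))).
  { apply rsum_ext; intros. apply rsum_swap. }
  rewrite rsum_swap.
  apply rsum_ext; intros j _.
  transitivity (rsum N (fun i => rsum 3 (fun b => rsum 3 (fun a => F i a j b)))).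
  { apply rsum_ext; intros. apply rsum_swap. }
  apply rsum_swap.
Qed.

Lemma jacobi N (A B C : PSfun) z : Good N A -> Good N B -> Good N C -> UU N z ->
  pb N (pb N A B) C z + pb N (pb N B C) A z + pb N (pb N C A) B z = 0.
Proof.
  intros HA HB HC Hz.
  set (beta := fun (X Y Z : PSfun) i a j b =>
     Dc (xc i a) (Dc (xc j b) X) z * Dc (pc j b) Y z * Dc (pc i a) Z z
   - Dc (xc i a) (Dc (pc j b) X) z * Dc (xc j b) Y z * Dc (pc i a) Z z
   - Dc (pc i a) (Dc (xc j b) X) z * Dc (pc j b) Y z * Dc (xc i a) Z z
   + Dc (pc i a) (Dc (pc j b) X) z * Dc (xc j b) Y z * Dc (xc i a) Z z).
  set (gamma := fun (X Y Z : PSfun) i a j b =>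
     Dc (xc j b) X z * Dc (xc i a) (Dc (pc j b) Y) z * Dc (pc i a) Z z
   - Dc (pc j b) X z * Dc (xc i a) (Dc (xc j b) Y) z * Dc (pc i a) Z z
   - Dc (xc j b) X z * Dc (pc i a) (Dc (pc j b) Y) z * Dc (xc i a) Z z
   + Dc (pc j b) X z * Dc (pc i a) (Dc (xc j b) Y) z * Dc (xc i a) Z z).
  assert (HE : forall X Y Z, Good N X -> Good N Y -> Good N Z ->
    pb N (pb N X Y) Z z = S4 N (beta X Y Z) + S4 N (gamma X Y Z)).
  { intros X Y Z HX HY HZ. rewrite <- S4_plus. rewrite pb_Dc. unfold S4.
    apply rsum_ext; intros i _. apply rsum_ext; intros a _.
    rewrite !(Dc_pb N) by auto. rewrite !rsum_mult_r, <- rsum_minus.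
    apply rsum_ext; intros j _. rewrite !rsum_mult_r, <- rsum_minus.
    apply rsum_ext; intros b _. unfold beta, gamma. ring. }
  assert (HP : forall X Y Z, Good N X -> S4 N (beta X Y Z) + S4 N (gamma Z X Y) = 0).
  { intros X Y Z HX. rewrite (S4_swap N (gamma Z X Y)), <- S4_plus. apply S4_zero.
    intros i a j b _ _ _ _. unfold beta, gamma.
    rewrite (Sym_good N X HX (xc j b) (pc i a)), (Sym_good N X HX (xc j b) (xc i a)),
            (Sym_good N X HX (pc j b) (pc i a)), (Sym_good N X HX (pc j b) (xc i a)) by auto.
    ring. }
  rewrite !HE by auto.
  pose proof (HP A B C HA); pose proof (HP B C A HB); pose proof (HP C A B HC). lra.
Qed.

Definition gcar N := {f : PSfun | Good N f /\ forall z, ~ UU N z -> f z = 0}.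
Definition gval {N} (x : gcar N) : PSfun := proj1_sig x.

Definition norm N (F : PSfun) : PSfun :=
  fun z => if excluded_middle_informative (UU N z) then F z else 0.

Lemma norm_prop N F : Good N F -> Good N (norm N F) /\ forall z, ~ UU N z -> norm N F z = 0.
Proof.
  intros H. split.
  - apply Gext with F; auto. intros z Hz; unfold norm. destruct (excluded_middle_informative (UU N z)); tauto.
  - intros z Hz; unfold norm. destruct (excluded_middle_informative (UU N z)); tauto.
Qed.

Lemma zero_prop N : Good N (fun _ => 0) /\ forall z : PS, ~ UU N z -> 0 = 0.
Proof. split; auto. apply Gc. Qed.

Definition mkG N (F : PSfun) : gcar N :=
  match excluded_middle_informative (Good N F) with
  | left H => exist _ (norm N F) (norm_prop N F H)
  | right _ => exist _ (fun _ => 0) (zero_prop N)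
  end.

Lemma mkG_val N F z : Good N F -> UU N z -> gval (mkG N F) z = F z.
Proof.
  intros H Hz. unfold mkG. destruct (excluded_middle_informative (Good N F)); [|tauto].
  simpl. unfold norm. destruct (excluded_middle_informative (UU N z)); tauto.
Qed.

Lemma mkG_off N F z : ~ UU N z -> gval (mkG N F) z = 0.
Proof.
  intros Hz. unfold mkG. destruct (excluded_middle_informative (Good N F)); simpl; auto.
  unfold norm. destruct (excluded_middle_informative (UU N z)); tauto.
Qed.

Lemma gval_good N (x : gcar N) : Good N (gval x).
Proof. destruct x as [f [H1 H2]]; auto. Qed.
Lemma gval_off N (x : gcar N) z : ~ UU N z -> gval x z = 0.
Proof. destruct x as [f [H1 H2]]; simpl; auto. Qed.

Definition gadd {N} (x y : gcar N) : gcar N.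
Proof.
  refine (exist _ (fun z => gval x z + gval y z) _). split.
  - apply Gadd; apply gval_good.
  - intros z Hz; rewrite !gval_off by auto; ring.
Defined.

Definition gscal {N} (r : R) (x : gcar N) : gcar N.
Proof.
  refine (exist _ (fun z => r * gval x z) _). split.
  - apply Good_scal, gval_good.
  - intros z Hz; rewrite !gval_off by auto; ring.
Defined.

Definition g0 {N} : gcar N := exist _ (fun _ => 0) (zero_prop N).

Definition gbr {N} (x y : gcar N) : gcar N := mkG N (pb N (gval y) (gval x)).

Lemma gbr_val N (x y : gcar N) z : UU N z -> gval (gbr x y) z = pb N (gval y) (gval x) z.
Proof. intros Hz. apply mkG_val; auto. apply Good_pb; apply gval_good. Qed.

Lemma gsep N (x y : gcar N) : (forall z, gval x z = gval y z) -> x = y.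
Proof.
  destruct x as [f Hf], y as [g Hg]; simpl. intros H.
  assert (f = g) by (apply functional_extensionality; auto). subst g.
  f_equal. apply proof_irrelevance.
Qed.

Ltac gcase N z := destruct (classic (UU N z)) as [Hz|Hz].

Lemma gbr_addl N (x y w : gcar N) : gbr (gadd x y) w = gadd (gbr x w) (gbr y w).
Proof.
  apply gsep; intro z. gcase N z.
  - simpl. rewrite !gbr_val by auto. apply pb_addr; auto; apply gval_good.
  - simpl. unfold gbr. rewrite !mkG_off by auto. ring.
Qed.

Lemma gbr_addr N (x y w : gcar N) : gbr w (gadd x y) = gadd (gbr w x) (gbr w y).
Proof.
  apply gsep; intro z. gcase N z.
  - simpl. rewrite !gbr_val by auto. apply pb_addl; auto; apply gval_good.
  - simpl. unfold gbr. rewrite !mkG_off by auto. ring.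
Qed.

Lemma gbr_scall N r (x w : gcar N) : gbr (gscal r x) w = gscal r (gbr x w).
Proof.
  apply gsep; intro z. gcase N z.
  - simpl. rewrite !gbr_val by auto. apply pb_scalr; auto; apply gval_good.
  - simpl. unfold gbr. rewrite !mkG_off by auto. ring.
Qed.

Lemma gbr_scalr N r (x w : gcar N) : gbr w (gscal r x) = gscal r (gbr w x).
Proof.
  apply gsep; intro z. gcase N z.
  - simpl. rewrite !gbr_val by auto. apply pb_scall; auto; apply gval_good.
  - simpl. unfold gbr. rewrite !mkG_off by auto. ring.
Qed.

Lemma gbr_0l N (w : gcar N) : gbr g0 w = g0.
Proof.
  apply gsep; intro z. gcase N z.
  - simpl. rewrite gbr_val by auto. apply pb_0r.
  - simpl. unfold gbr. rewrite mkG_off by auto. reflexivity.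
Qed.

Lemma gbr_0r N (w : gcar N) : gbr w g0 = g0.
Proof.
  apply gsep; intro z. gcase N z.
  - simpl. rewrite gbr_val by auto. apply pb_0l.
  - simpl. unfold gbr. rewrite mkG_off by auto. reflexivity.
Qed.

Lemma gbr_anti N z (x y : gcar N) : gval (gbr x y) z = - gval (gbr y x) z.
Proof.
  gcase N z.
  - rewrite !gbr_val by auto. apply pb_anti.
  - unfold gbr; rewrite !mkG_off by auto; ring.
Qed.

Lemma gbr_jac N z (x y w : gcar N) :
  gval (gbr x (gbr y w)) z + gval (gbr y (gbr w x)) z + gval (gbr w (gbr x y)) z = 0.
Proof.
  gcase N z.
  - assert (E : forall a b c : gcar N, pb N (gval (gbr b c)) (gval a) z = pb N (pb N (gval c) (gval b)) (gval a) z).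
    { intros. apply pb_loc; auto. intros; apply gbr_val; auto. }
    rewrite !(gbr_val N _ _ z Hz), !E. pose proof (jacobi N (gval w) (gval y) (gval x) z). 
    assert (Gx := gval_good N x); assert (Gy := gval_good N y); assert (Gw := gval_good N w).
    specialize (H Gw Gy Gx Hz). lra.
  - unfold gbr; rewrite !mkG_off by auto; ring.
Qed.

Definition GL (N : nat) : LieA := {|
  car := gcar N; ladd := gadd; lscal := gscal; l0 := g0; lbr := gbr;
  Ix := PS; ev := fun z x => gval x z;
  ev_add := fun i x y => eq_refl; ev_scal := fun i r x => eq_refl; ev_0 := fun i => eq_refl;
  sep := gsep N;
  br_addl := gbr_addl N; br_addr := gbr_addr N; br_scall := gbr_scall N; br_scalr := gbr_scalr N;
  br_0l := gbr_0l N; br_0r := gbr_0r N; br_anti := gbr_anti N; br_jac := gbr_jac N |}.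

Definition validS N (S : list (nat * nat)) :=
  forall p, In p S -> (fst p < N)%nat /\ (snd p < N)%nat /\ fst p <> snd p.

Lemma good_Ti N m i : Good N (Ti m i).
Proof.
  apply Gext with (fun z => (fun z => rsum 3 (fun a => getc (pc i a) z * getc (pc i a) z)) z * (fun _ => / (2 * m i)) z).
  - apply Gmul. apply (Good_rsum N 3 (fun a z => getc (pc i a) z * getc (pc i a) z)).
    intros; apply Gmul; apply Gx. apply Gc.
  - intros z _. unfold Ti, Rdiv. f_equal. apply rsum_ext; intros; simpl; ring.
Qed.

Lemma good_Ttot N m : Good N (Ttot N m).
Proof. apply (Good_rsum N N (fun i => Ti m i)). intros; apply good_Ti. Qed.

Lemma good_dsq N i j : Good N (fun z => dsq z i j).
Proof.
  apply (Good_rsum N 3 (fun a z => (fst z i a - fst z j a) ^ 2)). intros a _.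
  apply Gext with (fun z => (fun z => getc (xc i a) z - getc (xc j a) z) z * (fun z => getc (xc i a) z - getc (xc j a) z) z).
  apply Gmul; apply Good_minus; apply Gx. intros; simpl; ring.
Qed.

Lemma good_Vij N G m i j : (i < N)%nat -> (j < N)%nat -> i <> j -> Good N (Vij G m i j).
Proof.
  intros Hi Hj Hij.
  apply Gext with (fun z => (fun _ => - G * m i * m j) z * (fun z => Rpower (dsq z i j) (- / 2)) z).
  - apply Gmul. apply Gc. apply Gpow. apply good_dsq. intros z Hz; apply Hz; auto.
  - intros z Hz. unfold Vij, Rdiv. f_equal. rewrite Rpower_Ropp, Rpower_sqrt by (apply Hz; auto). reflexivity.
Qed.

Lemma good_Vtot N G m : Good N (Vtot N G m).
Proof.
  apply (Good_rsum N N (fun i z => rsum N (fun j => if Nat.ltb i j then Vij G m i j z else 0))).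
  intros i Hi. apply (Good_rsum N N (fun j z => if Nat.ltb i j then Vij G m i j z else 0)).
  intros j Hj. destruct (Nat.ltb_spec i j).
  - apply good_Vij; auto; lia.
  - apply Gc.
Qed.

Lemma good_Vs N G m S : validS N S -> Good N (Vs G m S).
Proof.
  induction S as [|p S IH]; intros H.
  - apply Gext with (fun _ => 0). apply Gc. intros; reflexivity.
  - apply Gext with (fun z => Vij G m (fst p) (snd p) z + Vs G m S z).
    + destruct (H p) as [H1 [H2 H3]]; simpl; auto. apply Gadd. apply good_Vij; auto.
      apply IH. intros q Hq; apply H; simpl; auto.
    + intros; reflexivity.
Qed.

Lemma good_Vc N G m S : validS N S -> Good N (Vc N G m S).
Proof. intros H. apply Good_minus. apply good_Vtot. apply good_Vs; auto. Qed.

Lemma good_Tpair N m p : Good N (Tpair m p).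
Proof. apply Gadd; apply good_Ti. Qed.

Lemma good_Hn N G m p : (fst p < N)%nat -> (snd p < N)%nat -> fst p <> snd p -> Good N (Hn G m p).
Proof. intros. apply Gadd. apply good_Tpair. apply good_Vij; auto. Qed.

Definition Trest N m (p : nat * nat) : PSfun := fun z =>
  rsum N (fun i => if (Nat.eqb i (fst p) || Nat.eqb i (snd p))%bool then 0 else Ti m i z).

Lemma good_Tr N m p : Good N (Trest N m p).
Proof.
  apply (Good_rsum N N (fun i z => if (Nat.eqb i (fst p) || Nat.eqb i (snd p))%bool then 0 else Ti m i z)).
  intros i _. destruct (Nat.eqb i (fst p) || Nat.eqb i (snd p))%bool. apply Gc. apply good_Ti.
Qed.

Definition momonly (F : PSfun) := forall X X' P, F (X, P) = F (X', P).
Definition posonly (F : PSfun) := forall X P P', F (X, P) = F (X, P').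

Lemma Dx_mom F i a z : momonly F -> Dc (xc i a) F z = 0.
Proof.
  intros H. unfold Dc. rewrite (Derive_ext _ (fun _ => F z)). apply Derive_const.
  intros t. destruct z as [X P]. simpl. apply H.
Qed.

Lemma Dp_pos F i a z : posonly F -> Dc (pc i a) F z = 0.
Proof.
  intros H. unfold Dc. rewrite (Derive_ext _ (fun _ => F z)). apply Derive_const.
  intros t. destruct z as [X P]. simpl. apply H.
Qed.

Lemma pb_mm N A B z : momonly A -> momonly B -> pb N A B z = 0.
Proof.
  intros HA HB. rewrite pb_Dc. apply rsum_zero; intros i _; apply rsum_zero; intros a _.
  rewrite !Dx_mom by auto. ring.
Qed.

Lemma pb_pp N A B z : posonly A -> posonly B -> pb N A B z = 0.
Proof.
  intros HA HB. rewrite pb_Dc. apply rsum_zero; intros i _; apply rsum_zero; intros a _.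
  rewrite !Dp_pos by auto. ring.
Qed.

Lemma pb_mp N A B z : momonly A -> posonly B ->
  (forall l, (l < N)%nat -> (forall X P a t, A (X, upd P l a t) = A (X, P)) \/
                            (forall X P a t, B (upd X l a t, P) = B (X, P))) ->
  pb N A B z = 0.
Proof.
  intros HA HB H. rewrite pb_Dc. apply rsum_zero; intros i Hi; apply rsum_zero; intros a _.
  rewrite Dx_mom, Dp_pos by auto.
  destruct (H i Hi) as [H1|H1].
  - assert (E : Dc (pc i a) A z = 0).
    { unfold Dc. rewrite (Derive_ext _ (fun _ => A z)). apply Derive_const.
      intros t. destruct z as [X P]. simpl. apply H1. }
    rewrite E; ring.
  - assert (E : Dc (xc i a) B z = 0).
    { unfold Dc. rewrite (Derive_ext _ (fun _ => B z)). apply Derive_const.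
      intros t. destruct z as [X P]. simpl. apply H1. }
    rewrite E; ring.
Qed.

Lemma mom_Ti m i : momonly (Ti m i). Proof. intros X X' P; reflexivity. Qed.
Lemma mom_Tpair m p : momonly (Tpair m p). Proof. intros X X' P; reflexivity. Qed.
Lemma mom_Ttot N m : momonly (Ttot N m). Proof. intros X X' P; reflexivity. Qed.
Lemma mom_Tr N m p : momonly (Trest N m p). Proof. intros X X' P; reflexivity. Qed.
Lemma pos_Vij G m i j : posonly (Vij G m i j). Proof. intros X P P'; reflexivity. Qed.
Lemma pos_Vtot N G m : posonly (Vtot N G m). Proof. intros X P P'; reflexivity. Qed.
Lemma pos_Vs G m S : posonly (Vs G m S). Proof. intros X P P'; reflexivity. Qed.
Lemma pos_Vc N G m S : posonly (Vc N G m S). Proof. intros X P P'; reflexivity. Qed.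

Lemma Tr_indep N m p l : (l = fst p \/ l = snd p) ->
  forall X P a t, Trest N m p (X, upd P l a t) = Trest N m p (X, P).
Proof.
  intros Hl X P a t. unfold Trest. apply rsum_ext; intros i _.
  destruct (Nat.eqb_spec i (fst p)), (Nat.eqb_spec i (snd p)); simpl; auto.
  unfold Ti; simpl. f_equal. apply rsum_ext; intros b _. unfold upd.
  destruct (Nat.eqb_spec i l); [lia|]. reflexivity.
Qed.

Lemma Vij_indep G m i j l : l <> i -> l <> j ->
  forall X P a t, Vij G m i j (upd X l a t, P) = Vij G m i j (X, P).
Proof.
  intros Hi Hj X P a t. unfold Vij, Defs.dist; cbn [fst snd].
  assert (E : rsum 3 (fun b => (upd X l a t i b - upd X l a t j b) ^ 2) = rsum 3 (fun b => (X i b - X j b) ^ 2)).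
  { apply rsum_ext; intros b _.
    unfold upd. destruct (Nat.eqb_spec i l); [lia|]. destruct (Nat.eqb_spec j l); [lia|]. reflexivity. }
  rewrite E; reflexivity.
Qed.

Lemma pb_Tr_V N m G p z : pb N (Trest N m p) (Vij G m (fst p) (snd p)) z = 0.
Proof.
  apply pb_mp. apply mom_Tr. apply pos_Vij.
  intros l _. destruct (Nat.eq_dec l (fst p)) as [E|E]; [left; apply Tr_indep; auto|].
  destruct (Nat.eq_dec l (snd p)) as [E'|E']; [left; apply Tr_indep; auto|].
  right. apply Vij_indep; auto.
Qed.

Lemma ev_GL N z (x : car (GL N)) : @ev (GL N) z x = gval x z.
Proof. reflexivity. Qed.

Lemma atom_raw N (x y w : car (GL N)) (F G' H : PSfun) z : UU N z ->
  (forall v, UU N v -> gval x v = F v) -> (forall v, UU N v -> gval y v = G' v) ->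
  (forall v, UU N v -> gval w v = H v) ->
  @ev (GL N) z (lbr x (lbr y w)) = pb N (pb N H G') F z.
Proof.
  intros Hz Hx Hy Hw. rewrite ev_GL. simpl. rewrite gbr_val by auto.
  apply pb_loc; auto. intros v Hv. rewrite gbr_val by auto. apply pb_loc; auto.
Qed.


Definition TTe N m : car (GL N) := mkG N (Ttot N m).
Definition Vce N G m S : car (GL N) := mkG N (Vc N G m S).
Definition tpe N m p : car (GL N) := mkG N (Tpair m p).
Definition hpe N G m p : car (GL N) := mkG N (Hn G m p).
Definition ve N G m p : car (GL N) := mkG N (Vij G m (fst p) (snd p)).
Definition tre N m p : car (GL N) := mkG N (Trest N m p).

Ltac gcase2 N z := destruct (classic (UU N z)) as [Hz|Hz].

Lemma rel_h N G m p : (fst p < N)%nat -> (snd p < N)%nat -> fst p <> snd p ->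
  hpe N G m p = ladd (tpe N m p) (ve N G m p).
Proof.
  intros H1 H2 H3. apply gsep; intro z. simpl. unfold hpe, tpe, ve. gcase2 N z.
  - rewrite !mkG_val by (auto; first [apply good_Hn | apply good_Tpair | apply good_Vij]; auto). reflexivity.
  - rewrite !mkG_off by auto. ring.
Qed.

Lemma rel_T N m p : (fst p < N)%nat -> (snd p < N)%nat -> fst p <> snd p ->
  TTe N m = ladd (tpe N m p) (tre N m p).
Proof.
  intros H1 H2 H3. apply gsep; intro z. simpl. unfold TTe, tpe, tre. gcase2 N z.
  - rewrite !mkG_val by (auto; first [apply good_Ttot | apply good_Tpair | apply good_Tr]).
    unfold Ttot, Tpair, fadd, Trest.
    rewrite (rsum_split N (fst p)) by auto. rewrite (rsum_split N (snd p)) by auto.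
    rewrite (rsum_ext N (fun i => if Nat.eqb i (snd p) then 0 else if Nat.eqb i (fst p) then 0 else Ti m i z)
                      (fun i => if (Nat.eqb i (fst p) || Nat.eqb i (snd p))%bool then 0 else Ti m i z)).
    2:{ intros i _. destruct (Nat.eqb i (fst p)), (Nat.eqb i (snd p)); reflexivity. }
    destruct (Nat.eqb_spec (snd p) (fst p)); [lia|]. ring.
  - rewrite !mkG_off by auto. ring.
Qed.

Lemma rel_trv N G m p : lbr (tre N m p) (ve N G m p) = l0.
Proof.
  apply gsep; intro z. simpl. gcase2 N z.
  - rewrite gbr_val by auto. unfold ve, tre.
    destruct (classic (Good N (Vij G m (fst p) (snd p)))) as [HV|HV].
    + rewrite (pb_loc N _ (Vij G m (fst p) (snd p)) _ (Trest N m p)); auto.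
      * rewrite pb_anti, pb_Tr_V. ring.
      * intros; apply mkG_val; auto.
      * intros; apply mkG_val; auto; apply good_Tr.
    + unfold mkG at 1. destruct (excluded_middle_informative _); [tauto|]. simpl.
      apply pb_0l.
  - unfold gbr. rewrite mkG_off by auto. reflexivity.
Qed.


Lemma rel_mm N (F1 F2 : PSfun) : Good N F1 -> Good N F2 -> momonly F1 -> momonly F2 ->
  @lbr (GL N) (mkG N F1) (mkG N F2) = l0.
Proof.
  intros G1 G2 M1 M2. apply gsep; intro z. simpl. gcase2 N z.
  - rewrite gbr_val by auto. rewrite (pb_loc N _ F2 _ F1); auto.
    + apply pb_mm; auto.
    + intros; apply mkG_val; auto.
    + intros; apply mkG_val; auto.
  - unfold gbr. rewrite mkG_off by auto. reflexivity.
Qed.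

Lemma rel_pp N (F1 F2 : PSfun) : Good N F1 -> Good N F2 -> posonly F1 -> posonly F2 ->
  @lbr (GL N) (mkG N F1) (mkG N F2) = l0.
Proof.
  intros G1 G2 M1 M2. apply gsep; intro z. simpl. gcase2 N z.
  - rewrite gbr_val by auto. rewrite (pb_loc N _ F2 _ F1); auto.
    + apply pb_pp; auto.
    + intros; apply mkG_val; auto.
    + intros; apply mkG_val; auto.
  - unfold gbr. rewrite mkG_off by auto. reflexivity.
Qed.

Definition relS N (A : series) (a : ser (GL N)) := forall k z, UU N z -> A k z = gval (a k) z.

Lemma gval_csum N n (f : nat -> car (GL N)) z : gval (csum n f) z = rsum n (fun j => gval (f j) z).
Proof.
  unfold csum, rsum. generalize (seq 0 n). intros l. induction l as [|j l IH]; simpl; auto.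
  rewrite <- IH. reflexivity.
Qed.

Lemma relS_sbr N A B a b : relS N A a -> relS N B b -> relS N (sbr N A B) (lsbr a b).
Proof.
  intros HA HB k z Hz. unfold sbr, lsbr. rewrite gval_csum. apply rsum_ext; intros j _.
  change (pb N (B (k - j)%nat) (A j) z = gval (gbr (a j) (b (k - j)%nat)) z).
  rewrite gbr_val by auto. apply pb_loc; auto.
Qed.

Lemma relS_sadd N A B a b : relS N A a -> relS N B b -> relS N (sadd A B) (lsadd a b).
Proof. intros HA HB k z Hz. unfold sadd, lsadd. simpl. rewrite HA, HB by auto. reflexivity. Qed.

Lemma relS_sscal N c A a : relS N A a -> relS N (sscal c A) (lsscal c a).
Proof. intros HA k z Hz. unfold sscal, lsscal. simpl. rewrite HA by auto. reflexivity. Qed.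

Lemma relS_bch N A B a b : relS N A a -> relS N B b -> relS N (bch N A B) (lbch a b).
Proof.
  intros HA HB. unfold bch, lbch. cbv zeta.
  assert (HAB := relS_sbr N A B a b HA HB).
  apply relS_sadd; [apply relS_sadd; [apply relS_sadd; auto | apply relS_sscal; auto] |].
  apply relS_sadd; [apply relS_sadd |].
  - apply relS_sscal. apply relS_sbr; auto.
  - apply relS_sscal. apply relS_sbr; auto.
  - apply relS_sscal. apply relS_sbr; auto. apply relS_sbr; auto.
Qed.

Lemma relS_mono N c F (f : car (GL N)) : (forall z, UU N z -> F z = gval f z) ->
  relS N (mono c F) (lmono (lscal c f)).
Proof.
  intros H k z Hz. unfold mono, lmono. destruct (Nat.eqb k 1); simpl; auto.
  unfold fscal. rewrite H; auto.
Qed.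

Lemma relS_zero N : relS N szero lszero.
Proof. intros k z Hz; reflexivity. Qed.

Lemma relS_fold N l1 l2 A a : Forall2 (relS N) l1 l2 -> relS N A a ->
  relS N (fold_left (bch N) l1 A) (fold_left lbch l2 a).
Proof.
  intros H. revert A a. induction H; intros A a HA; simpl; auto.
  apply IHForall2. apply relS_bch; auto.
Qed.

Lemma rev_flat_map {X Y : Type} (f : X -> list Y) (l : list X) :
  rev (flat_map f l) = flat_map (fun x => rev (f x)) (rev l).
Proof.
  induction l as [|x l IH]; simpl; auto.
  rewrite rev_app_distr, IH, flat_map_app. simpl. rewrite app_nil_r. reflexivity.
Qed.

Lemma Forall2_flat N {X : Type} (fA : X -> list series) (gA : X -> list (car (GL N))) (l : list X) :
  (forall p, In p l -> Forall2 (relS N) (fA p) (map lmono (gA p))) ->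
  Forall2 (relS N) (flat_map fA l) (map lmono (flat_map gA l)).
Proof.
  induction l as [|p l IH]; intros H; simpl. constructor.
  rewrite map_app. apply Forall2_app. apply H; simpl; auto. apply IH; intros; apply H; simpl; auto.
Qed.

Lemma val_VS N G m S z : validS N S -> UU N z -> gval (VS (ve N G m) S) z = Vs G m S z.
Proof.
  induction S as [|p S IH]; intros HS Hz. reflexivity.
  destruct (HS p) as [H1 [H2 H3]]; simpl; auto.
  change (gval (ve N G m p) z + gval (VS (ve N G m) S) z = Vij G m (fst p) (snd p) z + Vs G m S z).
  rewrite IH by (auto; intros q Hq; apply HS; simpl; auto).
  unfold ve. rewrite mkG_val by (auto; apply good_Vij; auto). reflexivity.
Qed.

Lemma val_DS N G m S z : validS N S -> UU N z ->
  gval (DS (ve N G m) (TTe N m) S) z =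
  lsum S (fun p => pb N (pb N (Ttot N m) (Vij G m (fst p) (snd p))) (Vij G m (fst p) (snd p)) z).
Proof.
  induction S as [|p S IH]; intros HS Hz. reflexivity.
  destruct (HS p) as [H1 [H2 H3]]; simpl; auto.
  change (gval (DS (ve N G m) (TTe N m) S) z + @ev (GL N) z (lbr (ve N G m p) (lbr (ve N G m p) (TTe N m)))
     = pb N (pb N (Ttot N m) (Vij G m (fst p) (snd p))) (Vij G m (fst p) (snd p)) z +
       lsum S (fun p => pb N (pb N (Ttot N m) (Vij G m (fst p) (snd p))) (Vij G m (fst p) (snd p)) z)).
  rewrite IH by (auto; intros q Hq; apply HS; simpl; auto).
  rewrite (atom_raw N _ _ _ (Vij G m (fst p) (snd p)) (Vij G m (fst p) (snd p)) (Ttot N m)); auto.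
  - unfold lsum; simpl. ring.
  - intros; apply mkG_val; auto; apply good_Vij; auto.
  - intros; apply mkG_val; auto; apply good_Vij; auto.
  - intros; apply mkG_val; auto; apply good_Ttot.
Qed.

Theorem mainTheorem6 (N : nat) (G : R) (m : nat -> R) (S : list (nat * nat)) :
  0 < G ->
  (forall i, (i < N)%nat -> 0 < m i) ->
  (forall p, In p S -> (fst p < N)%nat /\ (snd p < N)%nat /\ fst p <> snd p) ->
  NoDup (map (fun p => (Nat.min (fst p) (snd p), Nat.max (fst p) (snd p))) S) ->
  forall z : PS, noncoll N z ->
  forall k : nat, (k <= 4)%nat ->
    bchl N (DKB2_factors N G m S) k z = target N G m S k z.
Proof.
  intros HG Hm HS HND z Hnc k Hk.
  assert (Hz := noncoll_UU N z Hnc).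
  assert (HV : validS N S) by exact HS.
  set (TT := TTe N m). set (Vc' := Vce N G m S).
  set (tpf := tpe N m). set (hpf := hpe N G m). set (vf := ve N G m). set (trf := tre N m).
  set (u1 := @lscal (GL N) (1/2) TT). set (u2 := @lscal (GL N) (1/2) Vc').
  set (hl := [u1; u2] ++ blocks tpf hpf S).
  assert (EL : map lmono (hl ++ rev hl) =
     [lmono u1; lmono u2] ++ map lmono (blocks tpf hpf S)
     ++ map lmono (flat_map (fun p => [@lscal (GL N) (1/2) (hpf p); @lscal (GL N) (-1/2) (tpf p)]) (rev S))
     ++ [lmono u2; lmono u1]).
  { unfold hl. rewrite rev_app_distr. unfold blocks at 2. rewrite rev_flat_map.
    rewrite !map_app. simpl. rewrite <- ?app_assoc. reflexivity. }
  assert (HF : Forall2 (relS N) (DKB2_factors N G m S) (map lmono (hl ++ rev hl))).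
  { rewrite EL. unfold DKB2_factors.
    assert (GT : forall v, UU N v -> Ttot N m v = gval TT v) by (intros; symmetry; apply mkG_val; auto; apply good_Ttot).
    assert (GV : forall v, UU N v -> Vc N G m S v = gval Vc' v) by (intros; symmetry; apply mkG_val; auto; apply good_Vc; auto).
    assert (GP : forall p, In p S -> forall v, UU N v -> Tpair m p v = gval (tpf p) v)
      by (intros; symmetry; apply mkG_val; auto; apply good_Tpair).
    assert (GH : forall p, In p S -> forall v, UU N v -> Hn G m p v = gval (hpf p) v)
      by (intros p Hp; destruct (HS p Hp) as [? [? ?]]; intros; symmetry; apply mkG_val; auto; apply good_Hn; auto).
    apply Forall2_app.
    { constructor. apply relS_mono; auto. constructor. apply relS_mono; auto. constructor. }
    apply Forall2_app.
    { unfold blocks. apply Forall2_flat. intros p Hp. simpl.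
      constructor. apply relS_mono; auto. constructor. apply relS_mono; auto. constructor. }
    apply Forall2_app.
    { apply Forall2_flat. intros p Hp. apply in_rev in Hp. simpl.
      constructor. apply relS_mono; auto. constructor. apply relS_mono; auto. constructor. }
    constructor. apply relS_mono; auto. constructor. apply relS_mono; auto. constructor. }
  assert (E1 : bchl N (DKB2_factors N G m S) k z = gval (lbchl (map lmono (hl ++ rev hl)) k) z).
  { unfold bchl, lbchl. apply relS_fold; auto. apply relS_zero. }
  rewrite E1, (pal_ok hl k Hk).
  assert (Rh : forall p, In p S -> hpf p = ladd (tpf p) (vf p))
    by (intros p Hp; destruct (HS p Hp) as [? [? ?]]; apply rel_h; auto).
  assert (RT : forall p, In p S -> TT = ladd (tpf p) (trf p))
    by (intros p Hp; destruct (HS p Hp) as [? [? ?]]; apply rel_T; auto).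
  assert (Rtv : forall p, In p S -> lbr (trf p) (vf p) = l0) by (intros; apply rel_trv).
  assert (Rtt : forall p, In p S -> lbr (trf p) (tpf p) = l0)
    by (intros; apply rel_mm; [apply good_Tr | apply good_Tpair | apply mom_Tr | apply mom_Tpair]).
  assert (Rvv : forall p q, In p S -> In q S -> lbr (vf p) (vf q) = l0).
  { intros p q Hp Hq. destruct (HS p Hp) as [? [? ?]]. destruct (HS q Hq) as [? [? ?]].
    apply rel_pp; try apply pos_Vij; apply good_Vij; auto. }
  assert (RcV : lbr Vc' (VS vf S) = l0).
  { apply VS_comm. intros q Hq. destruct (HS q Hq) as [? [? ?]].
    apply rel_pp; [apply good_Vc; auto | apply good_Vij; auto | apply pos_Vc | apply pos_Vij]. }
  assert (P1B := P1_blocks tpf hpf vf S Rh).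
  assert (P3B := P3_blocks tpf hpf trf vf TT S Rh RT Rtv Rtt Rvv).
  unfold PSer.
  destruct k as [|[|[|[|[|k]]]]]; try lia.
  - reflexivity.
  - change (gval (P1 hl) z = Htot N G m z).
    change (P1 hl) with (ladd (lscal 2 u1) (ladd (lscal 2 u2) (P1 (blocks tpf hpf S)))).
    rewrite P1B. simpl. unfold TT, Vc' at 1, TTe, Vce.
    rewrite !mkG_val by (auto; first [apply good_Ttot | apply good_Vc; auto]).
    unfold vf. rewrite val_VS by auto.
    unfold Htot, fadd, Vc, fsub. lra.
  - reflexivity.
  - change (gval (P3 hl) z = Err2 N G m S z).
    change (P3 hl) with (ladd (ladd (P3 (blocks tpf hpf S)) (s3 u2 (P1 (blocks tpf hpf S))))
                              (s3 u1 (ladd (lscal 2 u2) (P1 (blocks tpf hpf S))))).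
    rewrite P3B, P1B. rewrite <- ev_GL. unfold u1, u2.
    rewrite (final_id TT Vc' (VS vf S) (DS vf TT S) z RcV).
    assert (GT : forall v, UU N v -> gval TT v = Ttot N m v) by (intros; apply mkG_val; auto; apply good_Ttot).
    assert (GV : forall v, UU N v -> gval Vc' v = Vc N G m S v) by (intros; apply mkG_val; auto; apply good_Vc; auto).
    assert (GS : forall v, UU N v -> gval (VS vf S) v = Vs G m S v) by (intros; apply val_VS; auto).
    rewrite (atom_raw N TT TT Vc' (Ttot N m) (Ttot N m) (Vc N G m S)) by auto.
    rewrite (atom_raw N Vc' Vc' TT (Vc N G m S) (Vc N G m S) (Ttot N m)) by auto.
    rewrite (atom_raw N Vc' (VS vf S) TT (Vc N G m S) (Vs G m S) (Ttot N m)) by auto.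
    rewrite (atom_raw N (VS vf S) (VS vf S) TT (Vs G m S) (Vs G m S) (Ttot N m)) by auto.
    rewrite ev_GL. unfold vf, TT. rewrite val_DS by auto.
    unfold Err2, pb3. ring.
  - reflexivity.
Qed.
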